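(* Let $-\infty<a<b<\infty$, let $f:[a,b]\times\mathbb{R}\times\mathbb{R}\to\mathbb{R}$, $(x,u,p)\mapsto f(x,u,p)$, be of class $C^3$, and let $\Phi(u)=\int_a^b f(x,u(x),u'(x))\,dx$ on $C^1([a,b])$. Let $u^0\in C^1([a,b])$ be an extremal (i.e. $\frac{d}{dx}f^0_p=f^0_u$ on $[a,b]$) satisfying $f^0_p(a)=f^0_p(b)=0$, and assume there is $c^0>0$ with $f^0_{pp}(x)\ge c^0$ for all $x\in[a,b]$. Let $h$ be a nontrivial solution of the Jacobi equation $\mathcal{A}h=0$ on $[a,b]$ with $\mathcal{B}h(a)=0$. (i) If $h(y)=0$ for some $y\in(a,b]$, or if $\mathcal{B}h(b)\,h(b)<0$, then $u^0$ is not a weak minimizer of $\Phi$ in $C^1([a,b])$. (ii) If $h(y)\neq0$ for all $y\in(a,b]$ and $\mathcal{B}h(b)\,h(b)>0$, then $u^0$ is a strict weak minimizer of $\Phi$ in $C^1([a,b])$.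
   Context: For a partial derivative $\mathfrak{f}$ of $f$ (e.g. $f_p,f_u,f_{pp},f_{pu},f_{up},f_{uu}$) write $\mathfrak{f}^0(x)=\mathfrak{f}(x,u^0(x),(u^0)'(x))$. For $h\in C^2([a,b])$ define $\mathcal{B}h=f^0_{pp}h'+f^0_{pu}h$, $\mathcal{C}h=f^0_{up}h'+f^0_{uu}h$ and $\mathcal{A}h=-\frac{d}{dx}(\mathcal{B}h)+\mathcal{C}h$; the Jacobi equation is $\mathcal{A}h=0$. No endpoint constraints are imposed. $u^0$ is a weak minimizer in $C^1([a,b])$ if there is $\varepsilon>0$ with $\Phi(v)\ge\Phi(u^0)$ for all $v\in C^1([a,b])$ with $\|v-u^0\|_{C^1}<\varepsilon$ (where $\|v\|_{C^1}=\max|v|+\max|v'|$); strict if $\Phi(v)>\Phi(u^0)$ for such $v\ne u^0$. *)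

(* Defs.v *)
From Stdlib Require Import Reals.
From Coquelicot Require Import Coquelicot.
Open Scope R_scope.

Definition cont3 (g : R -> R -> R -> R) : Prop :=
  forall x u p eps, 0 < eps -> exists delta, 0 < delta /\
    forall x' u' p', Rabs (x' - x) < delta -> Rabs (u' - u) < delta ->
      Rabs (p' - p) < delta -> Rabs (g x' u' p' - g x u p) < eps.

Definition Dx (g : R -> R -> R -> R) : R -> R -> R -> R :=
  fun x u p => Derive (fun t => g t u p) x.
Definition Du (g : R -> R -> R -> R) : R -> R -> R -> R :=
  fun x u p => Derive (fun t => g x t p) u.
Definition Dp (g : R -> R -> R -> R) : R -> R -> R -> R :=
  fun x u p => Derive (fun t => g x u t) p.

Fixpoint Ck3 (k : nat) (g : R -> R -> R -> R) : Prop :=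
  match k with
  | O => cont3 g
  | S k' => cont3 g /\
      (forall x u p, ex_derive (fun t => g t u p) x /\
                     ex_derive (fun t => g x t p) u /\
                     ex_derive (fun t => g x u t) p) /\
      Ck3 k' (Dx g) /\ Ck3 k' (Du g) /\ Ck3 k' (Dp g)
  end.


Definition deriv_within (a b : R) (g : R -> R) (x l : R) : Prop :=
  forall eps, 0 < eps -> exists delta, 0 < delta /\
    forall y, a <= y <= b -> Rabs (y - x) < delta ->
      Rabs (g y - g x - l * (y - x)) <= eps * Rabs (y - x).

Definition cont_on (a b : R) (g : R -> R) : Prop :=
  forall x, a <= x <= b -> forall eps, 0 < eps -> exists delta, 0 < delta /\
    forall y, a <= y <= b -> Rabs (y - x) < delta -> Rabs (g y - g x) < eps.

Definition C1_on (a b : R) (v dv : R -> R) : Prop :=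
  (forall x, a <= x <= b -> deriv_within a b v x (dv x)) /\ cont_on a b dv.

Definition C2_on (a b : R) (h dh ddh : R -> R) : Prop :=
  C1_on a b h dh /\ C1_on a b dh ddh.

(* ||v - w||_{C^1} < eps, i.e. max|v-w| + max|v'-w'| < eps on [a,b]
   (maxima exist by continuity; stated via bounds M1 >= max|v-w|, M2 >= max|v'-w'|) *)
Definition C1_dist_lt (a b : R) (v dv w dw : R -> R) (eps : R) : Prop :=
  exists M1 M2, M1 + M2 < eps /\
    forall x, a <= x <= b -> Rabs (v x - w x) <= M1 /\ Rabs (dv x - dw x) <= M2.

Definition Phi (a b : R) (f : R -> R -> R -> R) (v dv : R -> R) : R :=
  RInt (fun x => f x (v x) (dv x)) a b.

Definition weak_minimizer (a b : R) (f : R -> R -> R -> R) (u0 du0 : R -> R) : Prop :=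
  exists eps, 0 < eps /\
    forall v dv, C1_on a b v dv -> C1_dist_lt a b v dv u0 du0 eps ->
      Phi a b f u0 du0 <= Phi a b f v dv.

Definition strict_weak_minimizer (a b : R) (f : R -> R -> R -> R) (u0 du0 : R -> R) : Prop :=
  exists eps, 0 < eps /\
    forall v dv, C1_on a b v dv -> C1_dist_lt a b v dv u0 du0 eps ->
      (exists x, a <= x <= b /\ v x <> u0 x) ->
      Phi a b f u0 du0 < Phi a b f v dv.

(* partial derivative g evaluated along u0: g^0(x) = g(x, u0(x), u0'(x)) *)
Definition along (g : R -> R -> R -> R) (u0 du0 : R -> R) : R -> R :=
  fun x => g x (u0 x) (du0 x).

(* f_p, f_u, f_pp, f_pu (= d/du f_p), f_up (= d/dp f_u), f_uu *)
Definition fp f := Dp f.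
Definition fu f := Du f.
Definition fpp f := Dp (Dp f).
Definition fpu f := Du (Dp f).
Definition fup f := Dp (Du f).
Definition fuu f := Du (Du f).

Definition Bop f (u0 du0 h dh : R -> R) : R -> R :=
  fun x => along (fpp f) u0 du0 x * dh x + along (fpu f) u0 du0 x * h x.
Definition Cop f (u0 du0 h dh : R -> R) : R -> R :=
  fun x => along (fup f) u0 du0 x * dh x + along (fuu f) u0 du0 x * h x.

Definition jacobi_sol (a b : R) f (u0 du0 h dh : R -> R) : Prop :=
  forall x, a <= x <= b ->
    exists l, deriv_within a b (Bop f u0 du0 h dh) x l /\
              - l + Cop f u0 du0 h dh x = 0.

(* Main.v *)
Require Import Defs.
From Stdlib Require Import Reals Lra Psatz IndefiniteDescription.
From Coquelicot Require Import Coquelicot.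
Open Scope R_scope.

Definition clamp (c d x : R) := Rmax c (Rmin d x).

Lemma clamp_in c d x : c <= d -> c <= clamp c d x <= d.
Proof. intros H; unfold clamp, Rmax, Rmin; repeat destruct Rle_dec; lra. Qed.

Lemma clamp_id c d x : c <= x <= d -> clamp c d x = x.
Proof. intros H; unfold clamp, Rmax, Rmin; repeat destruct Rle_dec; lra. Qed.

Lemma clamp_lip c d x y : c <= d -> Rabs (clamp c d x - clamp c d y) <= Rabs (x - y).
Proof.
  intros H; unfold clamp, Rmax, Rmin; repeat destruct Rle_dec;
  unfold Rabs; repeat destruct Rcase_abs; lra.
Qed.

Lemma clamp_side c d x y : c <= d -> clamp c d x <> clamp c d y ->
  Rabs (x - clamp c d x) <= Rabs (x - y).
Proof.
  intros H; unfold clamp, Rmax, Rmin; repeat destruct Rle_dec;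
  unfold Rabs; repeat destruct Rcase_abs; intros; lra.
Qed.

Lemma continuous_eps (g : R -> R) x :
  (forall eps, 0 < eps -> exists delta, 0 < delta /\
     forall y, Rabs (y - x) < delta -> Rabs (g y - g x) < eps) -> continuous g x.
Proof.
  intros H. apply continuity_pt_filterlim.
  intros eps Heps. destruct (H eps Heps) as [d [Hd H']].
  exists d; split; auto. intros y [_ Hy]. simpl in *. unfold R_dist in *. apply H'; auto.
Qed.

Lemma eps_continuous (g : R -> R) x : continuous g x ->
  (forall eps, 0 < eps -> exists delta, 0 < delta /\
     forall y, Rabs (y - x) < delta -> Rabs (g y - g x) < eps).
Proof.
  intros H. apply continuity_pt_filterlim in H.
  intros eps Heps. destruct (H eps Heps) as [d [Hd H']].
  exists d; split; auto. intros y Hy.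
  destruct (Req_dec y x) as [->|Hne].
  - rewrite Rminus_diag, Rabs_R0; auto.
  - apply H'. split. split. exact I. auto. simpl; unfold R_dist; auto.
Qed.

Lemma cont_on_clamp c d g : c <= d -> cont_on c d g ->
  forall x, continuous (fun t => g (clamp c d t)) x.
Proof.
  intros Hcd Hg x. apply continuous_eps. intros eps Heps.
  destruct (Hg (clamp c d x) (clamp_in c d x Hcd) eps Heps) as [dl [Hdl H]].
  exists dl; split; auto. intros y Hy. apply H. apply clamp_in; auto.
  eapply Rle_lt_trans. apply clamp_lip; auto. auto.
Qed.

Lemma clamp_cont_on c d g : c <= d -> (forall x, continuous (fun t => g (clamp c d t)) x) ->
  cont_on c d g.
Proof.
  intros Hcd H x Hx eps Heps.
  destruct (eps_continuous _ _ (H x) eps Heps) as [dl [Hdl H']].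
  exists dl; split; auto. intros y Hy Hyx. specialize (H' y Hyx).
  rewrite !clamp_id in H'; auto.
Qed.

Lemma cont_on_sub c d c' d' g : c <= c' -> d' <= d -> cont_on c d g -> cont_on c' d' g.
Proof.
  intros H1 H2 Hg x Hx eps Heps. destruct (Hg x ltac:(lra) eps Heps) as [dl [Hdl H]].
  exists dl; split; auto. intros y Hy Hyx; apply H; auto; lra.
Qed.

Lemma cont_on_const c d k : cont_on c d (fun _ => k).
Proof. intros x _ eps He. exists 1; split; [lra|]. intros. rewrite Rminus_diag, Rabs_R0; auto. Qed.

Lemma cont_on_id c d : cont_on c d (fun x => x).
Proof. intros x _ eps He. exists eps; split; auto. Qed.

Ltac via_clamp := let Hcd := fresh in
  match goal with |- cont_on ?c ?d _ => idtac end.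

Lemma cont_on_plus c d F G : c <= d -> cont_on c d F -> cont_on c d G ->
  cont_on c d (fun x => F x + G x).
Proof.
  intros Hcd HF HG. apply clamp_cont_on; auto. intros x.
  apply (continuous_plus (fun t => F (clamp c d t)) (fun t => G (clamp c d t)));
  apply cont_on_clamp; auto.
Qed.

Lemma cont_on_mult c d F G : c <= d -> cont_on c d F -> cont_on c d G ->
  cont_on c d (fun x => F x * G x).
Proof.
  intros Hcd HF HG. apply clamp_cont_on; auto. intros x.
  apply (continuous_mult (fun t => F (clamp c d t)) (fun t => G (clamp c d t)));
  apply cont_on_clamp; auto.
Qed.

Lemma cont_on_opp c d F : c <= d -> cont_on c d F -> cont_on c d (fun x => - F x).
Proof.
  intros Hcd HF. apply clamp_cont_on; auto. intros x.
  apply (continuous_opp (fun t => F (clamp c d t))); apply cont_on_clamp; auto.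
Qed.

Lemma cont_on_minus c d F G : c <= d -> cont_on c d F -> cont_on c d G ->
  cont_on c d (fun x => F x - G x).
Proof.
  intros. apply (cont_on_plus c d F (fun x => - G x)); auto. apply cont_on_opp; auto.
Qed.

Lemma cont_on_inv c d F : c <= d -> cont_on c d F -> (forall x, c <= x <= d -> F x <> 0) ->
  cont_on c d (fun x => / F x).
Proof.
  intros Hcd HF Hnz. apply clamp_cont_on; auto. intros x.
  apply (continuous_comp (fun t => F (clamp c d t)) Rinv).
  apply cont_on_clamp; auto.
  apply continuity_pt_filterlim. apply continuity_pt_inv.
  apply continuity_pt_id. apply Hnz, clamp_in; auto.
Qed.

Lemma cont_on_pow c d F n : c <= d -> cont_on c d F -> cont_on c d (fun x => F x ^ n).
Proof.
  intros Hcd HF. induction n; simpl. apply cont_on_const.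
  apply cont_on_mult; auto.
Qed.

Lemma cont_on_abs c d F : c <= d -> cont_on c d F -> cont_on c d (fun x => Rabs (F x)).
Proof.
  intros Hcd HF. apply clamp_cont_on; auto. intros x.
  apply (continuous_comp (fun t => F (clamp c d t)) Rabs).
  apply cont_on_clamp; auto.
  apply continuity_pt_filterlim. apply Rcontinuity_abs.
Qed.

Lemma cont_on_cont3 c d G v w : cont3 G -> cont_on c d v -> cont_on c d w ->
  cont_on c d (fun x => G x (v x) (w x)).
Proof.
  intros HG Hv Hw x Hx eps Heps.
  destruct (HG x (v x) (w x) eps Heps) as [d1 [Hd1 H1]].
  destruct (Hv x Hx d1 Hd1) as [d2 [Hd2 H2]].
  destruct (Hw x Hx d1 Hd1) as [d3 [Hd3 H3]].
  exists (Rmin d1 (Rmin d2 d3)); split.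
  repeat apply Rmin_pos; auto.
  intros y Hy Hyx.
  assert (Rmin d1 (Rmin d2 d3) <= d1) by apply Rmin_l.
  assert (Rmin d1 (Rmin d2 d3) <= d2) by (eapply Rle_trans; [apply Rmin_r| apply Rmin_l]).
  assert (Rmin d1 (Rmin d2 d3) <= d3) by (eapply Rle_trans; [apply Rmin_r| apply Rmin_r]).
  apply H1; try lra. apply H2; auto; lra. apply H3; auto; lra.
Qed.

Lemma cont_on_bounded c d g : c <= d -> cont_on c d g ->
  exists M, 0 < M /\ forall x, c <= x <= d -> Rabs (g x) <= M.
Proof.
  intros Hcd Hg.
  destruct (continuity_ab_maj (fun t => Rabs (g (clamp c d t))) c d Hcd) as [m [Hm _]].
  intros t _. apply continuity_pt_filterlim.
  apply (continuous_comp (fun t => g (clamp c d t)) Rabs). apply cont_on_clamp; auto.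
  apply continuity_pt_filterlim. apply Rcontinuity_abs.
  exists (Rabs (g (clamp c d m)) + 1). split. pose proof (Rabs_pos (g (clamp c d m))); lra.
  intros x Hx. specialize (Hm x Hx). rewrite clamp_id in Hm; auto. lra.
Qed.

Lemma cont_on_min_pos c d g : c <= d -> cont_on c d g -> (forall x, c <= x <= d -> g x <> 0) ->
  exists m, 0 < m /\ forall x, c <= x <= d -> m <= Rabs (g x).
Proof.
  intros Hcd Hg Hnz.
  destruct (continuity_ab_min (fun t => Rabs (g (clamp c d t))) c d Hcd) as [m [Hm Hmi]].
  intros t _. apply continuity_pt_filterlim.
  apply (continuous_comp (fun t => g (clamp c d t)) Rabs). apply cont_on_clamp; auto.
  apply continuity_pt_filterlim. apply Rcontinuity_abs.
  exists (Rabs (g (clamp c d m))). split.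
  apply Rabs_pos_lt. rewrite clamp_id; auto.
  intros x Hx. specialize (Hm x Hx). rewrite (clamp_id c d x) in Hm; auto.
Qed.

Lemma deriv_within_of_is_derive c d F G x l : is_derive F x l ->
  (forall t, c <= t <= d -> F t = G t) -> c <= x <= d -> deriv_within c d G x l.
Proof.
  intros HF Heq Hx. apply is_derive_Reals in HF.
  intros eps Heps. destruct (HF eps Heps) as [dl Hdl].
  exists dl; split. apply cond_pos.
  intros y Hy Hyx. rewrite <- (Heq y Hy), <- (Heq x Hx).
  destruct (Req_dec y x) as [->|Hne].
  - rewrite !Rminus_diag, Rmult_0_r, Rminus_0_r, Rabs_R0, Rmult_0_r; lra.
  - assert (Hh : y - x <> 0) by lra.
    specialize (Hdl (y - x) Hh Hyx). replace (x + (y - x)) with y in Hdl by ring.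
    replace (F y - F x - l * (y - x)) with (((F y - F x) / (y - x) - l) * (y - x))
      by (field; auto).
    rewrite Rabs_mult. apply Rmult_le_compat_r. apply Rabs_pos. lra.
Qed.

Lemma deriv_within_cont c d G g : (forall x, c <= x <= d -> deriv_within c d G x (g x)) ->
  cont_on c d G.
Proof.
  intros H x Hx eps Heps. destruct (H x Hx 1 Rlt_0_1) as [dl [Hdl H1]].
  exists (Rmin dl (eps / (1 + Rabs (g x)))). split.
  apply Rmin_pos; auto. apply Rdiv_lt_0_compat; auto. pose proof (Rabs_pos (g x)); lra.
  intros y Hy Hyx.
  assert (Hm1 := Rmin_l dl (eps / (1 + Rabs (g x)))).
  assert (Hm2 := Rmin_r dl (eps / (1 + Rabs (g x)))).
  specialize (H1 y Hy ltac:(lra)).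
  assert (Hp : 0 < 1 + Rabs (g x)) by (pose proof (Rabs_pos (g x)); lra).
  replace (G y - G x) with ((G y - G x - g x * (y - x)) + g x * (y - x)) by ring.
  eapply Rle_lt_trans. apply Rabs_triang. rewrite Rabs_mult.
  assert (Rabs (y - x) * (1 + Rabs (g x)) < eps).
  { apply Rmult_lt_reg_r with (/ (1 + Rabs (g x))). apply Rinv_0_lt_compat; auto.
    rewrite Rmult_assoc, Rinv_r, Rmult_1_r by lra. unfold Rdiv in Hm2. lra. }
  nra.
Qed.

Definition ext (c d : R) (G g : R -> R) (t : R) :=
  G (clamp c d t) + (t - clamp c d t) * g (clamp c d t).

Lemma ext_id c d G g t : c <= t <= d -> ext c d G g t = G t.
Proof. intros H; unfold ext; rewrite clamp_id; auto; ring. Qed.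

Lemma ext_derive c d G g : c <= d -> C1_on c d G g ->
  forall x, is_derive (ext c d G g) x (g (clamp c d x)).
Proof.
  intros Hcd [HG Hg] x. apply is_derive_Reals. intros eps Heps.
  set (cx := clamp c d x).
  assert (Hcx : c <= cx <= d) by (apply clamp_in; auto).
  destruct (HG cx Hcx (eps/4) ltac:(lra)) as [d1 [Hd1 H1]].
  destruct (Hg cx Hcx (eps/4) ltac:(lra)) as [d2 [Hd2 H2]].
  assert (Hmp : 0 < Rmin d1 d2) by (apply Rmin_pos; auto).
  exists (mkposreal _ Hmp). intros hh Hh0 Hh. simpl in Hh.
  assert (Hm1 := Rmin_l d1 d2). assert (Hm2 := Rmin_r d1 d2).
  set (t := x + hh). set (ct := clamp c d t).
  assert (Hct : c <= ct <= d) by (apply clamp_in; auto).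
  assert (Hl : Rabs (ct - cx) <= Rabs hh).
  { unfold ct, cx. replace hh with (t - x) by (unfold t; ring). apply clamp_lip; auto. }
  assert (Hkey : Rabs (ext c d G g t - ext c d G g x - g cx * hh) <= eps / 2 * Rabs hh).
  { unfold ext. fold cx ct.
    replace (G ct + (t - ct) * g ct - (G cx + (x - cx) * g cx) - g cx * hh)
      with ((G ct - G cx - g cx * (ct - cx)) + (t - ct) * (g ct - g cx))
      by (unfold t; ring).
    eapply Rle_trans. apply Rabs_triang.
    assert (A1 : Rabs (G ct - G cx - g cx * (ct - cx)) <= eps / 4 * Rabs hh).
    { eapply Rle_trans. apply H1; auto. lra.
      apply Rmult_le_compat_l; lra. }
    assert (A2 : Rabs ((t - ct) * (g ct - g cx)) <= eps / 4 * Rabs hh).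
    { destruct (Req_dec ct cx) as [E|E].
      - rewrite E, Rminus_diag, Rmult_0_r, Rabs_R0. pose proof (Rabs_pos hh). nra.
      - rewrite Rabs_mult.
        assert (Rabs (t - ct) <= Rabs hh).
        { replace hh with (t - x) by (unfold t; ring). apply clamp_side; auto. }
        assert (Rabs (g ct - g cx) < eps / 4) by (apply H2; auto; lra).
        pose proof (Rabs_pos (t - ct)). pose proof (Rabs_pos (g ct - g cx)). nra. }
    lra. }
  replace ((ext c d G g t - ext c d G g x) / hh - g cx)
    with ((ext c d G g t - ext c d G g x - g cx * hh) / hh) by (field; auto).
  unfold Rdiv. rewrite Rabs_mult, Rabs_inv.
  apply Rmult_le_compat_r with (r := / Rabs hh) in Hkey.
  2:{ apply Rlt_le, Rinv_0_lt_compat, Rabs_pos_lt; auto. }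
  rewrite Rmult_assoc, Rinv_r in Hkey. 2:{ apply Rabs_no_R0; auto. } lra.
Qed.

Lemma ex_RInt_on c d g : c <= d -> cont_on c d g -> ex_RInt g c d.
Proof.
  intros Hcd Hg. apply ex_RInt_ext with (fun t => g (clamp c d t)).
  intros x Hx. rewrite Rmin_left, Rmax_right in Hx; auto. rewrite clamp_id; auto; lra.
  apply (@ex_RInt_continuous R_CompleteNormedModule). intros z _. apply cont_on_clamp; auto.
Qed.

Lemma FTC c d G g : c <= d -> C1_on c d G g -> RInt g c d = G d - G c :> R.
Proof.
  intros Hcd HG.
  assert (HI : is_RInt (fun t => g (clamp c d t)) c d (minus (ext c d G g d) (ext c d G g c))).
  { apply (@is_RInt_derive R_CompleteNormedModule). intros x _. apply ext_derive; auto.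
    intros x _. apply cont_on_clamp; auto. apply HG. }
  rewrite (ext_id c d G g d), (ext_id c d G g c) in HI by lra.
  apply (@is_RInt_unique R_CompleteNormedModule) in HI. change (RInt (fun t => g (clamp c d t)) c d = G d - G c) in HI.
  rewrite <- HI.
  apply RInt_ext. intros x Hx. rewrite Rmin_left, Rmax_right in Hx; auto.
  rewrite clamp_id; auto; lra.
Qed.

Lemma RInt_plus_on c d F G : c <= d -> cont_on c d F -> cont_on c d G ->
  RInt (fun x => F x + G x) c d = RInt F c d + RInt G c d :> R.
Proof. intros. exact (RInt_plus F G c d (ex_RInt_on c d F H H0) (ex_RInt_on c d G H H1)). Qed.

Lemma RInt_minus_on c d F G : c <= d -> cont_on c d F -> cont_on c d G ->
  RInt (fun x => F x - G x) c d = RInt F c d - RInt G c d :> R.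
Proof. intros. exact (RInt_minus F G c d (ex_RInt_on c d F H H0) (ex_RInt_on c d G H H1)). Qed.

Lemma RInt_scal_on c d k F : c <= d -> cont_on c d F ->
  RInt (fun x => k * F x) c d = k * RInt F c d :> R.
Proof. intros. exact (RInt_scal F c d k (ex_RInt_on c d F H H0)). Qed.

Lemma RInt_ext_on c d (F G : R -> R) : c <= d -> (forall x, c <= x <= d -> F x = G x) ->
  RInt F c d = RInt G c d :> R.
Proof.
  intros Hcd H. apply RInt_ext. intros x Hx. rewrite Rmin_left, Rmax_right in Hx; auto.
  apply H; lra.
Qed.

Lemma RInt_le_on c d F G : c <= d -> cont_on c d F -> cont_on c d G ->
  (forall x, c <= x <= d -> F x <= G x) -> RInt F c d <= RInt G c d.
Proof.
  intros. apply RInt_le; auto; try apply ex_RInt_on; auto. intros; apply H2; lra.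
Qed.

Lemma RInt_ge0_on c d F : c <= d -> cont_on c d F ->
  (forall x, c <= x <= d -> 0 <= F x) -> 0 <= RInt F c d.
Proof.
  intros. apply RInt_ge_0; auto; try apply ex_RInt_on; auto. intros; apply H1; lra.
Qed.

Lemma RInt_const_on c d (k : R) : RInt (fun _ => k) c d = (d - c) * k :> R.
Proof. rewrite RInt_const. reflexivity. Qed.

Lemma RInt_abs_le c d F G : c <= d -> cont_on c d F -> cont_on c d G ->
  (forall x, c <= x <= d -> Rabs (F x) <= G x) -> Rabs (RInt F c d) <= RInt G c d.
Proof.
  intros Hcd HF HG H. apply Rabs_le. split.
  - rewrite <- (Rmult_1_l (RInt G c d)), Ropp_mult_distr_l, <- RInt_scal_on; auto.
    apply RInt_le_on; auto. apply (cont_on_mult c d (fun _ => -1) G); auto; apply cont_on_const.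
    intros x Hx; specialize (H x Hx); apply Rabs_le_between in H; lra.
  - apply RInt_le_on; auto. intros x Hx; specialize (H x Hx).
    eapply Rle_trans. apply Rle_abs. auto.
Qed.

Lemma RInt_bound c d F K : c <= d -> cont_on c d F ->
  (forall x, c <= x <= d -> Rabs (F x) <= K) -> Rabs (RInt F c d) <= K * (d - c).
Proof.
  intros. rewrite <- (Rmult_comm (d - c)), <- RInt_const_on.
  apply RInt_abs_le; auto. apply cont_on_const.
Qed.

Lemma RInt_chasles_on c m d F : c <= m -> m <= d -> cont_on c d F ->
  RInt F c m + RInt F m d = RInt F c d :> R.
Proof.
  intros H1 H2 HF.
  exact (RInt_Chasles F c m d (ex_RInt_on c m F H1 (cont_on_sub c d c m F ltac:(lra) ltac:(lra) HF))
                     (ex_RInt_on m d F H2 (cont_on_sub c d m d F ltac:(lra) ltac:(lra) HF))).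
Qed.

Lemma C1_cont c d G g : C1_on c d G g -> cont_on c d G.
Proof. intros [H _]. eapply deriv_within_cont; eauto. Qed.

Lemma C1_sub c d c' d' G g : c <= c' -> d' <= d -> C1_on c d G g -> C1_on c' d' G g.
Proof.
  intros H1 H2 [HG Hg]. split.
  - intros x Hx eps He. destruct (HG x ltac:(lra) eps He) as [dl [Hdl H]].
    exists dl; split; auto. intros y Hy Hyx; apply H; auto; lra.
  - eapply cont_on_sub; eauto.
Qed.

Lemma C1_smooth c d G g : (forall t, is_derive G t (g t)) -> (forall t, continuous g t) ->
  C1_on c d G g.
Proof.
  intros HG Hg. split.
  - intros x Hx. apply deriv_within_of_is_derive with G; auto.
  - intros x Hx eps He. destruct (eps_continuous g x (Hg x) eps He) as [dl [Hdl H]].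
    exists dl; split; auto.
Qed.

Lemma C1_transfer c d F f G g : c <= d -> C1_on c d F f ->
  (forall x, c <= x <= d -> is_derive (ext c d F f) x (f x) -> is_derive G x (g x)) ->
  (forall x, c <= x <= d -> G x = ext c d F f x) -> cont_on c d g -> True.
Proof. auto. Qed.

Lemma C1_mult c d F f G g : c <= d -> C1_on c d F f -> C1_on c d G g ->
  C1_on c d (fun x => F x * G x) (fun x => f x * G x + F x * g x).
Proof.
  intros Hcd HF HG. split.
  - intros x Hx.
    apply deriv_within_of_is_derive with (fun t => ext c d F f t * ext c d G g t); auto.
    + pose proof (ext_derive c d F f Hcd HF x) as D1.
      pose proof (ext_derive c d G g Hcd HG x) as D2.
      rewrite clamp_id in D1, D2; auto.
      pose proof (is_derive_mult _ _ x _ _ D1 D2 Rmult_comm) as D.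
      rewrite (ext_id c d F f x), (ext_id c d G g x) in D; auto.
    + intros t Ht. rewrite !ext_id; auto.
  - apply cont_on_plus; auto; apply cont_on_mult; auto;
      try apply (C1_cont c d _ _ HF); try apply (C1_cont c d _ _ HG); try apply HF; apply HG.
Qed.

Lemma C1_plus c d F f G g : c <= d -> C1_on c d F f -> C1_on c d G g ->
  C1_on c d (fun x => F x + G x) (fun x => f x + g x).
Proof.
  intros Hcd HF HG. split.
  - intros x Hx.
    apply deriv_within_of_is_derive with (fun t => ext c d F f t + ext c d G g t); auto.
    + pose proof (ext_derive c d F f Hcd HF x) as D1.
      pose proof (ext_derive c d G g Hcd HG x) as D2.
      rewrite clamp_id in D1, D2; auto.
      exact (is_derive_plus _ _ x _ _ D1 D2).
    + intros t Ht. rewrite !ext_id; auto.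
  - apply cont_on_plus; auto; [apply HF | apply HG].
Qed.

Lemma C1_const c d (k : R) : C1_on c d (fun _ => k) (fun _ => 0).
Proof.
  apply C1_smooth. intros; apply (@is_derive_const R_AbsRing R_NormedModule). intros; apply continuous_const.
Qed.

Lemma C1_ext c d F f G g : C1_on c d F f -> (forall x, c <= x <= d -> F x = G x) ->
  (forall x, c <= x <= d -> f x = g x) -> C1_on c d G g.
Proof.
  intros [HF Hf] E1 E2. split.
  - intros x Hx eps He. destruct (HF x Hx eps He) as [dl [Hdl H]].
    exists dl; split; auto. intros y Hy Hyx. rewrite <- !E1, <- E2; auto.
  - intros x Hx eps He. destruct (Hf x Hx eps He) as [dl [Hdl H]].
    exists dl; split; auto. intros y Hy Hyx. rewrite <- !E2; auto.
Qed.

Lemma C1_scal c d k F f : c <= d -> C1_on c d F f -> C1_on c d (fun x => k * F x) (fun x => k * f x).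
Proof.
  intros Hcd HF. eapply C1_ext. apply (C1_mult c d (fun _ => k) (fun _ => 0) F f); auto.
  apply C1_const. simpl; auto. intros; simpl; ring.
Qed.

Lemma C1_inv c d F f : c <= d -> C1_on c d F f -> (forall x, c <= x <= d -> F x <> 0) ->
  C1_on c d (fun x => / F x) (fun x => - f x / F x ^ 2).
Proof.
  intros Hcd HF Hnz. split.
  - intros x Hx.
    apply deriv_within_of_is_derive with (fun t => / ext c d F f t); auto.
    + pose proof (ext_derive c d F f Hcd HF x) as D1. rewrite clamp_id in D1; auto.
      pose proof (is_derive_inv _ x _ D1) as D. rewrite ext_id in D; auto.
    + intros t Ht. rewrite !ext_id; auto.
  - unfold Rdiv. apply cont_on_mult; auto. apply cont_on_opp; auto; apply HF.
    apply cont_on_inv; auto. apply cont_on_pow; auto. eapply C1_cont; eauto.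
    intros x Hx. apply pow_nonzero; auto.
Qed.

Lemma Ck3_cont n g : Ck3 n g -> cont3 g.
Proof. destruct n; simpl; tauto. Qed.

Lemma Ck3_ex n g : Ck3 (S n) g -> forall x u p,
  ex_derive (fun t => g t u p) x /\ ex_derive (fun t => g x t p) u /\ ex_derive (fun t => g x u t) p.
Proof. simpl; tauto. Qed.

Lemma Ck3_Du n g : Ck3 (S n) g -> Ck3 n (Du g).
Proof. simpl; tauto. Qed.
Lemma Ck3_Dp n g : Ck3 (S n) g -> Ck3 n (Dp g).
Proof. simpl; tauto. Qed.

Lemma Du_derive n g x u p : Ck3 (S n) g -> is_derive (fun t => g x t p) u (Du g x u p).
Proof. intros H. apply Derive_correct. apply (Ck3_ex n g H x u p). Qed.
Lemma Dp_derive n g x u p : Ck3 (S n) g -> is_derive (fun t => g x u t) p (Dp g x u p).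
Proof. intros H. apply Derive_correct. apply (Ck3_ex n g H x u p). Qed.

Lemma schwarz3 f x u p : Ck3 3 f -> Du (Dp f) x u p = Dp (Du f) x u p.
Proof.
  intros Hf. unfold Du, Dp.
  assert (H1 : Ck3 2 (Du f)) by (apply Ck3_Du; auto).
  assert (H2 : Ck3 2 (Dp f)) by (apply Ck3_Dp; auto).
  assert (C1 : cont3 (Du (Dp f))) by (apply (Ck3_cont 1); apply Ck3_Du; auto).
  assert (C2 : cont3 (Dp (Du f))) by (apply (Ck3_cont 1); apply Ck3_Dp; auto).
  apply (Schwarz (fun u p => f x u p)).
  - apply locally_2d_forall. intros u' v'.
    destruct (Ck3_ex 2 f Hf x u' v') as [_ [E1 E2]].
    destruct (Ck3_ex 1 (Dp f) H2 x u' v') as [_ [E3 _]].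
    destruct (Ck3_ex 1 (Du f) H1 x u' v') as [_ [_ E4]].
    repeat split; auto.
  - intros eps. destruct (C1 x u p eps (cond_pos eps)) as [dl [Hdl H]].
    exists (mkposreal dl Hdl). intros u' v' Hu Hv. simpl in *.
    apply (H x u' v'); auto. rewrite Rminus_diag, Rabs_R0; auto.
  - intros eps. destruct (C2 x u p eps (cond_pos eps)) as [dl [Hdl H]].
    exists (mkposreal dl Hdl). intros u' v' Hu Hv. simpl in *.
    apply (H x u' v'); auto. rewrite Rminus_diag, Rabs_R0; auto.
Qed.

Lemma unif_near c d G v w : c <= d -> cont3 G -> cont_on c d v -> cont_on c d w ->
  forall eps, 0 < eps -> exists delta, 0 < delta /\
    forall x u p, c <= x <= d -> Rabs (u - v x) <= delta -> Rabs (p - w x) <= delta ->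
      Rabs (G x u p - G x (v x) (w x)) <= eps.
Proof.
  intros Hcd HG Hv Hw eps Heps.
  set (P := fun t (rho : posreal) => c <= t <= d -> forall x' u p, c <= x' <= d ->
     Rabs (x' - t) < rho -> Rabs (u - v x') < rho -> Rabs (p - w x') < rho ->
     Rabs (G x' u p - G t (v t) (w t)) < eps / 2).
  assert (Hex : forall t, exists rho, P t rho).
  { intros t. destruct (Rle_dec c t) as [H1|H1]; [destruct (Rle_dec t d) as [H2|H2]|].
    2,3: exists (mkposreal 1 Rlt_0_1); intros Ht; lra.
    destruct (HG t (v t) (w t) (eps/2) ltac:(lra)) as [s [Hs HGs]].
    destruct (Hv t ltac:(lra) (s/2) ltac:(lra)) as [s1 [Hs1 Hv1]].
    destruct (Hw t ltac:(lra) (s/2) ltac:(lra)) as [s2 [Hs2 Hw2]].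
    assert (Hr : 0 < Rmin (s/2) (Rmin s1 s2)) by (repeat apply Rmin_pos; lra).
    exists (mkposreal _ Hr). intros Ht x' u p Hx' H1' H2' H3'. simpl in *.
    assert (A1 := Rmin_l (s/2) (Rmin s1 s2)).
    assert (A2 := Rmin_l s1 s2). assert (A3 := Rmin_r s1 s2).
    assert (A4 := Rmin_r (s/2) (Rmin s1 s2)).
    apply HGs. lra.
    + specialize (Hv1 x' Hx' ltac:(lra)).
      replace (u - v t) with ((u - v x') + (v x' - v t)) by ring.
      eapply Rle_lt_trans. apply Rabs_triang. lra.
    + specialize (Hw2 x' Hx' ltac:(lra)).
      replace (p - w t) with ((p - w x') + (w x' - w t)) by ring.
      eapply Rle_lt_trans. apply Rabs_triang. lra. }
  set (rho := fun t => proj1_sig (constructive_indefinite_description _ (Hex t))).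
  assert (Hrho : forall t, P t (rho t)).
  { intros t. unfold rho. destruct (constructive_indefinite_description _ (Hex t)); auto. }
  destruct (compactness_value_1d c d rho) as [D HD].
  exists (D / 2). split. pose proof (cond_pos D); lra.
  intros x u p Hx Hu Hp.
  apply Rnot_lt_le. intros Hc. apply (HD x Hx). intros [t [Ht [Hxt HDt]]].
  assert (E1 := Hrho t Ht x u p Hx Hxt ltac:(pose proof (cond_pos D); lra) ltac:(pose proof (cond_pos D); lra)).
  assert (E2 := Hrho t Ht x (v x) (w x) Hx Hxt).
  rewrite !Rminus_diag, !Rabs_R0 in E2.
  specialize (E2 (cond_pos _) (cond_pos _)).
  assert (Rabs (G x u p - G x (v x) (w x)) < eps).
  { replace (G x u p - G x (v x) (w x)) with
      ((G x u p - G t (v t) (w t)) - (G x (v x) (w x) - G t (v t) (w t))) by ring.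
    eapply Rle_lt_trans. apply Rabs_triang. rewrite Rabs_Ropp. lra. }
  lra.
Qed.

Lemma mvt_bound (phi dphi : R -> R) A B K :
  (forall s, Rmin A B <= s <= Rmax A B -> is_derive phi s (dphi s) /\ Rabs (dphi s) <= K) ->
  Rabs (phi B - phi A) <= K * Rabs (B - A).
Proof.
  intros H.
  destruct (MVT_gen phi A B dphi) as [cc [Hc E]].
  - intros x Hx. apply H; lra.
  - intros x Hx. apply continuity_pt_filterlim. apply (@ex_derive_continuous R_AbsRing R_NormedModule).
    eexists; apply (proj1 (H x Hx)).
  - rewrite E, Rabs_mult. apply Rmult_le_compat_r. apply Rabs_pos. apply H; auto.
Qed.

Lemma seg_bound A al s : Rmin A (A + al) <= s <= Rmax A (A + al) -> Rabs (s - A) <= Rabs al.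
Proof. unfold Rmin, Rmax; destruct Rle_dec; unfold Rabs; repeat destruct Rcase_abs; lra. Qed.

Lemma is_derive_eq (F : R -> R) (x l l' : R) : is_derive F x l -> l = l' -> is_derive F x l'.
Proof. intros H ->; auto. Qed.

Lemma is_derive_poly2 c0 c1 c2 A s :
  is_derive (fun s => c0 + c1 * (s - A) + c2 * (s - A) ^ 2) s (c1 + 2 * c2 * (s - A)).
Proof. auto_derive. exact I. simpl; ring. Qed.

Lemma is_derive_sub_fun (F P : R -> R) s l m : is_derive F s l -> is_derive P s m ->
  is_derive (fun t => F t - P t) s (l - m).
Proof. intros. apply (is_derive_minus F P); auto. Qed.

Lemma taylor1 (phi phi1 : R -> R) A al k eps :
  (forall s, is_derive phi s (phi1 s)) ->
  (forall s, Rmin A (A + al) <= s <= Rmax A (A + al) -> Rabs (phi1 s - k) <= eps) ->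
  Rabs (phi (A + al) - phi A - k * al) <= eps * Rabs al.
Proof.
  intros D Hb.
  set (psi := fun s => phi s - (0 + k * (s - A) + 0 * (s - A) ^ 2)).
  replace (phi (A + al) - phi A - k * al) with (psi (A + al) - psi A) by (unfold psi; ring).
  assert (T : Rabs (psi (A + al) - psi A) <= eps * Rabs ((A + al) - A)).
  2:{ replace (A + al - A) with al in T by ring. exact T. }
  apply (mvt_bound psi (fun s => phi1 s - k)).
  intros s Hs. split; auto.
  apply is_derive_eq with (phi1 s - (k + 2 * 0 * (s - A))).
  apply is_derive_sub_fun; auto. apply is_derive_poly2. ring.
Qed.

Lemma taylor2_1d (phi phi1 phi2 : R -> R) A al k eps :
  (forall s, is_derive phi s (phi1 s)) -> (forall s, is_derive phi1 s (phi2 s)) ->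
  (forall s, Rmin A (A + al) <= s <= Rmax A (A + al) -> Rabs (phi2 s - k) <= eps) ->
  Rabs (phi (A + al) - phi A - phi1 A * al - / 2 * k * al ^ 2) <= eps * al ^ 2.
Proof.
  intros D1 D2 Hb.
  set (psi := fun s => phi s - (phi A + phi1 A * (s - A) + / 2 * k * (s - A) ^ 2)).
  replace (phi (A + al) - phi A - phi1 A * al - / 2 * k * al ^ 2) with (psi (A + al) - psi A)
    by (unfold psi; ring).
  assert (Heps : 0 <= eps).
  { eapply Rle_trans. apply Rabs_pos. apply (Hb A). unfold Rmin, Rmax; repeat destruct Rle_dec; lra. }
  assert (T : Rabs (psi (A + al) - psi A) <= (eps * Rabs al) * Rabs ((A + al) - A)).
  2:{ replace (A + al - A) with al in T by ring. eapply Rle_trans. exact T.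
      rewrite Rmult_assoc, <- Rabs_mult, Rabs_pos_eq; nra. }
  apply (mvt_bound psi (fun s => phi1 s - phi1 A - k * (s - A))).
  intros s Hs. split.
  - apply is_derive_eq with (phi1 s - (phi1 A + 2 * (/2 * k) * (s - A))).
    apply is_derive_sub_fun; auto. apply is_derive_poly2. field.
  - pose proof (taylor1 phi1 phi2 A (s - A) k eps D2) as T.
    replace (A + (s - A)) with s in T by ring.
    replace (phi1 s - phi1 A - k * (s - A)) with (phi1 s - phi1 A - k * (s - A)) by ring.
    eapply Rle_trans. apply T.
    + intros s' Hs'. apply Hb. revert Hs Hs'. unfold Rmin, Rmax; repeat destruct Rle_dec; intros; lra.
    + apply Rmult_le_compat_l; auto. apply seg_bound; auto.
Qed.

Lemma taylor2_2d (F Fu Fp Fuu Fpp Fpu : R -> R -> R) A B al be eps delta :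
  (forall u p, is_derive (fun s => F s p) u (Fu u p)) ->
  (forall u p, is_derive (fun s => F u s) p (Fp u p)) ->
  (forall u p, is_derive (fun s => Fu s p) u (Fuu u p)) ->
  (forall u p, is_derive (fun s => Fp u s) p (Fpp u p)) ->
  (forall u p, is_derive (fun s => Fp s p) u (Fpu u p)) ->
  (forall u p, Rabs (u - A) <= delta -> Rabs (p - B) <= delta ->
     Rabs (Fuu u p - Fuu A B) <= eps /\ Rabs (Fpp u p - Fpp A B) <= eps /\
     Rabs (Fpu u p - Fpu A B) <= eps) ->
  Rabs al <= delta -> Rabs be <= delta ->
  Rabs (F (A + al) (B + be) - F A B - Fu A B * al - Fp A B * be
        - / 2 * (Fuu A B * al ^ 2 + 2 * Fpu A B * al * be + Fpp A B * be ^ 2))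
    <= 2 * eps * (al ^ 2 + be ^ 2).
Proof.
  intros Du Dp Duu Dpp Dpu Hbox Hal Hbe.
  assert (T2 := taylor2_1d (fun s => F s B) (fun s => Fu s B) (fun s => Fuu s B) A al (Fuu A B) eps
     (fun s => Du s B) (fun s => Duu s B)).
  assert (T1 := taylor2_1d (fun s => F (A + al) s) (fun s => Fp (A + al) s) (fun s => Fpp (A + al) s)
     B be (Fpp A B) eps (fun s => Dp (A + al) s) (fun s => Dpp (A + al) s)).
  assert (T3 := taylor1 (fun s => Fp s B) (fun s => Fpu s B) A al (Fpu A B) eps
     (fun s => Dpu s B)).
  simpl in T1, T2, T3.
  assert (B2 : Rabs (F (A + al) B - F A B - Fu A B * al - / 2 * Fuu A B * al ^ 2) <= eps * al ^ 2).
  { apply T2. intros s Hs. apply Hbox. eapply Rle_trans. apply seg_bound; eauto. auto.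
    rewrite Rminus_diag, Rabs_R0. eapply Rle_trans. apply Rabs_pos. eauto. }
  assert (B1 : Rabs (F (A + al) (B + be) - F (A + al) B - Fp (A + al) B * be - / 2 * Fpp A B * be ^ 2)
               <= eps * be ^ 2).
  { apply T1. intros s Hs. apply Hbox. replace (A + al - A) with al by ring. auto.
    eapply Rle_trans. apply seg_bound; eauto. auto. }
  assert (B3 : Rabs (Fp (A + al) B - Fp A B - Fpu A B * al) <= eps * Rabs al).
  { apply T3. intros s Hs. apply Hbox. eapply Rle_trans. apply seg_bound; eauto. auto.
    rewrite Rminus_diag, Rabs_R0. eapply Rle_trans. apply Rabs_pos. eauto. }
  replace (F (A + al) (B + be) - F A B - Fu A B * al - Fp A B * be
        - / 2 * (Fuu A B * al ^ 2 + 2 * Fpu A B * al * be + Fpp A B * be ^ 2))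
    with ((F (A + al) (B + be) - F (A + al) B - Fp (A + al) B * be - / 2 * Fpp A B * be ^ 2)
          + (F (A + al) B - F A B - Fu A B * al - / 2 * Fuu A B * al ^ 2)
          + be * (Fp (A + al) B - Fp A B - Fpu A B * al)) by field.
  assert (Heps : 0 <= eps).
  { destruct (Hbox A B) as [H _]. rewrite Rminus_diag, Rabs_R0. eapply Rle_trans. apply Rabs_pos. eauto.
    rewrite Rminus_diag, Rabs_R0. eapply Rle_trans. apply Rabs_pos. eauto.
    eapply Rle_trans. apply Rabs_pos. eauto. }
  eapply Rle_trans. apply Rabs_triang.
  eapply Rle_trans. apply Rplus_le_compat. apply Rabs_triang. rewrite Rabs_mult. apply Rle_refl.
  assert (Rabs be * Rabs (Fp (A + al) B - Fp A B - Fpu A B * al) <= Rabs be * (eps * Rabs al)).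
  { apply Rmult_le_compat_l; auto. apply Rabs_pos. }
  assert (Rabs be * Rabs al <= al ^ 2 + be ^ 2).
  { rewrite <- (pow2_abs al), <- (pow2_abs be).
    pose proof (Rabs_pos al); pose proof (Rabs_pos be). nra. }
  assert (0 <= al ^ 2) by nra. assert (0 <= be ^ 2) by nra.
  nra.
Qed.

Definition Qf f u0 du0 a b (e de : R -> R) : R :=
  RInt (fun x => along (fpp f) u0 du0 x * de x ^ 2 + 2 * along (fpu f) u0 du0 x * e x * de x
                 + along (fuu f) u0 du0 x * e x ^ 2) a b.
Definition Nf a b (e de : R -> R) : R := RInt (fun x => e x ^ 2 + de x ^ 2) a b.

Ltac cont_tac := repeat (first [ assumption | lra | apply cont_on_const | apply cont_on_id
  | apply cont_on_plus | apply cont_on_minus | apply cont_on_mult | apply cont_on_pow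
  | apply cont_on_opp | apply cont_on_cont3 ]).

Lemma Ck3_3_conts f : Ck3 3 f ->
  cont3 f /\ cont3 (fp f) /\ cont3 (fu f) /\ cont3 (fpp f) /\ cont3 (fpu f) /\ cont3 (fup f) /\ cont3 (fuu f).
Proof.
  intros H. unfold fp, fu, fpp, fpu, fup, fuu.
  repeat split.
  apply (Ck3_cont 3); auto.
  apply (Ck3_cont 2); apply Ck3_Dp; auto.
  apply (Ck3_cont 2); apply Ck3_Du; auto.
  apply (Ck3_cont 1); apply Ck3_Dp; apply Ck3_Dp; auto.
  apply (Ck3_cont 1); apply Ck3_Du; apply Ck3_Dp; auto.
  apply (Ck3_cont 1); apply Ck3_Dp; apply Ck3_Du; auto.
  apply (Ck3_cont 1); apply Ck3_Du; apply Ck3_Du; auto.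
Qed.

Lemma Nf_ge0 a b e de : a <= b -> cont_on a b e -> cont_on a b de -> 0 <= Nf a b e de.
Proof.
  intros. unfold Nf. apply RInt_ge0_on; auto. cont_tac. intros; nra.
Qed.

Lemma KL a b f u0 du0 : a < b -> Ck3 3 f -> C1_on a b u0 du0 ->
  (forall x, a <= x <= b ->
     deriv_within a b (along (fp f) u0 du0) x (along (fu f) u0 du0 x)) ->
  along (fp f) u0 du0 a = 0 -> along (fp f) u0 du0 b = 0 ->
  forall eps, 0 < eps -> exists delta, 0 < delta /\
    forall e de, C1_on a b e de -> (forall x, a <= x <= b -> Rabs (e x) <= delta /\ Rabs (de x) <= delta) ->
    Rabs (Phi a b f (fun x => u0 x + e x) (fun x => du0 x + de x) - Phi a b f u0 du0
          - / 2 * Qf f u0 du0 a b e de) <= eps * Nf a b e de.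
Proof.
  intros Hab Hf Hu0 Hext Ha Hb eps Heps.
  destruct (Ck3_3_conts f Hf) as [Cf [Cfp [Cfu [Cfpp [Cfpu [Cfup Cfuu]]]]]].
  assert (Cu0 : cont_on a b u0) by (eapply C1_cont; eauto).
  assert (Cdu0 : cont_on a b du0) by apply Hu0.
  destruct (unif_near a b (fuu f) u0 du0 ltac:(lra) Cfuu Cu0 Cdu0 (eps/4) ltac:(lra)) as [d1 [Hd1 U1]].
  destruct (unif_near a b (fpp f) u0 du0 ltac:(lra) Cfpp Cu0 Cdu0 (eps/4) ltac:(lra)) as [d2 [Hd2 U2]].
  destruct (unif_near a b (fpu f) u0 du0 ltac:(lra) Cfpu Cu0 Cdu0 (eps/4) ltac:(lra)) as [d3 [Hd3 U3]].
  exists (Rmin d1 (Rmin d2 d3)). split. repeat apply Rmin_pos; auto.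
  intros e de He Hb_.
  assert (M1 := Rmin_l d1 (Rmin d2 d3)). assert (M2 := Rmin_l d2 d3).
  assert (M3 := Rmin_r d2 d3). assert (M4 := Rmin_r d1 (Rmin d2 d3)).
  assert (Ce : cont_on a b e) by (eapply C1_cont; eauto).
  assert (Cde : cont_on a b de) by apply He.
  set (R0 := fun x => f x (u0 x + e x) (du0 x + de x) - f x (u0 x) (du0 x)
     - fu f x (u0 x) (du0 x) * e x - fp f x (u0 x) (du0 x) * de x
     - / 2 * (fuu f x (u0 x) (du0 x) * e x ^ 2 + 2 * fpu f x (u0 x) (du0 x) * e x * de x
              + fpp f x (u0 x) (du0 x) * de x ^ 2)).
  assert (HR : forall x, a <= x <= b -> Rabs (R0 x) <= 2 * (eps / 4) * (e x ^ 2 + de x ^ 2)).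
  { intros x Hx. unfold R0.
    apply (taylor2_2d (f x) (fu f x) (fp f x) (fuu f x) (fpp f x) (fpu f x) (u0 x) (du0 x) (e x) (de x)
             (eps/4) (Rmin d1 (Rmin d2 d3))).
    - intros u p. apply (Du_derive 2); auto.
    - intros u p. apply (Dp_derive 2); auto.
    - intros u p. apply (Du_derive 1). apply Ck3_Du; auto.
    - intros u p. apply (Dp_derive 1). apply Ck3_Dp; auto.
    - intros u p. apply (Du_derive 1). apply Ck3_Dp; auto.
    - intros u p Hu Hp. repeat split.
      apply U1; auto; lra. apply U2; auto; lra. apply U3; auto; lra.
    - apply Hb_; auto.
    - apply Hb_; auto. }
  assert (CR0 : cont_on a b R0) by (unfold R0; cont_tac).
  assert (CL : cont_on a b (fun x => fu f x (u0 x) (du0 x) * e x + fp f x (u0 x) (du0 x) * de x))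
    by cont_tac.
  assert (EQ : Phi a b f (fun x => u0 x + e x) (fun x => du0 x + de x) - Phi a b f u0 du0
          - / 2 * Qf f u0 du0 a b e de
        = RInt R0 a b + RInt (fun x => fu f x (u0 x) (du0 x) * e x + fp f x (u0 x) (du0 x) * de x) a b).
  { unfold Phi, Qf. rewrite <- RInt_plus_on; auto; try lra.
    rewrite <- RInt_minus_on; try lra; [| cont_tac | cont_tac].
    rewrite <- RInt_scal_on; try lra; [| unfold along; cont_tac].
    rewrite <- RInt_minus_on; try lra; [| cont_tac | unfold along; cont_tac].
    apply RInt_ext_on; try lra. intros x Hx. unfold R0, along. ring. }
  assert (FV : RInt (fun x => fu f x (u0 x) (du0 x) * e x + fp f x (u0 x) (du0 x) * de x) a b = 0 :> R).
  { rewrite (FTC a b (fun x => along (fp f) u0 du0 x * e x)); try lra.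
    rewrite Ha, Hb. ring.
    apply (C1_mult a b (along (fp f) u0 du0) (along (fu f) u0 du0) e de); try lra; auto.
    split; auto. unfold along; cont_tac. }
  rewrite EQ, FV, Rplus_0_r.
  assert (HN : 0 <= Nf a b e de) by (apply Nf_ge0; auto; lra).
  eapply Rle_trans. apply (RInt_abs_le a b R0 (fun x => 2 * (eps / 4) * (e x ^ 2 + de x ^ 2))); auto; try lra.
  cont_tac.
  rewrite RInt_scal_on; try lra. fold (Nf a b e de). nra. cont_tac.
Qed.

Ltac rring := match goal with |- ?A = ?B => change (@eq R A B) end; ring.

Lemma RInt_le0_on c d F : c <= d -> cont_on c d F ->
  (forall x, c <= x <= d -> F x <= 0) -> RInt F c d <= 0.
Proof.
  intros. assert (0 <= RInt (fun x => -1 * F x) c d).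
  { apply RInt_ge0_on; auto. cont_tac. intros x Hx; specialize (H1 x Hx); lra. }
  rewrite RInt_scal_on in H2; auto. lra.
Qed.

Lemma C1_exp c d k z : C1_on c d (fun t => exp (k * (t - z))) (fun t => k * exp (k * (t - z))).
Proof.
  apply C1_smooth.
  - intros t. apply is_derive_eq with (k * (1 - 0) * exp (k * (t - z))).
    auto_derive. exact I. unfold Rminus; rring. rring.
  - intros t. apply (@ex_derive_continuous R_AbsRing R_NormedModule). auto_derive. exact I.
Qed.

Lemma jac_unique a b f u0 du0 h dh c0 z : a < b -> Ck3 3 f -> C1_on a b u0 du0 -> 0 < c0 ->
  (forall x, a <= x <= b -> c0 <= along (fpp f) u0 du0 x) ->
  C1_on a b h dh ->
  (forall x, a <= x <= b -> deriv_within a b (Bop f u0 du0 h dh) x (Cop f u0 du0 h dh x)) ->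
  a <= z <= b -> h z = 0 -> Bop f u0 du0 h dh z = 0 -> forall x, a <= x <= b -> h x = 0.
Proof.
  intros Hab Hf Hu0 Hc0 Hpp Hh HB Hz Hhz HBz.
  destruct (Ck3_3_conts f Hf) as [Cf [Cfp [Cfu [Cfpp [Cfpu [Cfup Cfuu]]]]]].
  assert (Cu0 : cont_on a b u0) by (eapply C1_cont; eauto).
  assert (Cdu0 : cont_on a b du0) by apply Hu0.
  assert (Ch : cont_on a b h) by (eapply C1_cont; eauto).
  assert (Cdh : cont_on a b dh) by apply Hh.
  set (B := Bop f u0 du0 h dh). set (C := Cop f u0 du0 h dh).
  assert (CC : cont_on a b C) by (unfold C, Cop, along; cont_tac).
  assert (HB1 : C1_on a b B C) by (split; auto).
  assert (CB : cont_on a b B) by (eapply C1_cont; eauto).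
  destruct (cont_on_bounded a b (along (fpu f) u0 du0) ltac:(lra) ltac:(unfold along; cont_tac)) as [P1 [HP1 B1]].
  destruct (cont_on_bounded a b (along (fup f) u0 du0) ltac:(lra) ltac:(unfold along; cont_tac)) as [P2 [HP2 B2]].
  destruct (cont_on_bounded a b (along (fuu f) u0 du0) ltac:(lra) ltac:(unfold along; cont_tac)) as [P3 [HP3 B3]].
  set (P := P1 + P2 + P3).
  set (E := fun x => h x * h x + B x * B x).
  set (dE := fun x => (dh x * h x + h x * dh x) + (C x * B x + B x * C x)).
  assert (HE : C1_on a b E dE) by (apply C1_plus; try lra; apply C1_mult; auto; lra).
  set (K := (1 + 2 * P + P * P + P * c0) / c0 + 1).
  assert (HK : forall x, a <= x <= b -> Rabs (dE x) <= K * E x).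
  { intros x Hx. unfold dE, E, K.
    specialize (B1 x Hx); specialize (B2 x Hx); specialize (B3 x Hx); specialize (Hpp x Hx).
    assert (EB : B x = along (fpp f) u0 du0 x * dh x + along (fpu f) u0 du0 x * h x) by reflexivity.
    assert (EC : C x = along (fup f) u0 du0 x * dh x + along (fuu f) u0 du0 x * h x) by reflexivity.
    set (X := Rabs (h x)). set (Y := Rabs (B x)). set (Dd := Rabs (dh x)).
    assert (HD : c0 * Dd <= Y + P * X).
    { assert (Hq : Rabs (B x - along (fpu f) u0 du0 x * h x) <= Rabs (B x) + P * Rabs (h x)).
      { eapply Rle_trans. apply Rabs_triang. rewrite Rabs_Ropp, Rabs_mult.
        apply Rplus_le_compat_l. apply Rmult_le_compat_r. apply Rabs_pos. unfold P; lra. }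
      assert (c0 * Dd <= along (fpp f) u0 du0 x * Dd) by (apply Rmult_le_compat_r; [apply Rabs_pos|lra]).
      assert (along (fpp f) u0 du0 x * Dd = Rabs (B x - along (fpu f) u0 du0 x * h x)).
      { unfold Dd. rewrite <- (Rabs_pos_eq (along (fpp f) u0 du0 x)) at 1 by lra.
        rewrite <- Rabs_mult. f_equal. rewrite EB; ring. }
      unfold Y, X. lra. }
    assert (HC : Rabs (C x) <= P * Dd + P * X).
    { rewrite EC. eapply Rle_trans. apply Rabs_triang. rewrite !Rabs_mult.
      unfold Dd, X. apply Rplus_le_compat; apply Rmult_le_compat_r; try apply Rabs_pos; unfold P; lra. }
    assert (E1 : h x * h x + B x * B x = X * X + Y * Y).
    { unfold X, Y. rewrite <- !Rabs_mult, (Rabs_pos_eq (h x * h x)), (Rabs_pos_eq (B x * B x)); nra. }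
    rewrite E1.
    replace (dh x * h x + h x * dh x + (C x * B x + B x * C x)) with (2 * (h x * dh x) + 2 * (B x * C x)) by ring.
    eapply Rle_trans. apply Rabs_triang. rewrite !Rabs_mult, Rabs_pos_eq by lra.
    fold X Dd Y.
    assert (0 <= X) by apply Rabs_pos. assert (0 <= Y) by apply Rabs_pos.
    assert (0 <= Dd) by apply Rabs_pos. assert (0 <= Rabs (C x)) by apply Rabs_pos.
    assert (0 <= P) by (unfold P; lra).
    clearbody X Y Dd P.
    assert (Hxy : 2 * X * Y <= X * X + Y * Y).
    { pose proof (Rle_0_sqr (X - Y)); unfold Rsqr in *; lra. }
    assert (c0 * (2 * (X * Dd) + 2 * (Y * Rabs (C x))) <= (1 + 2 * P + P * P + P * c0) * (X * X + Y * Y)).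
    { assert (h1 := Rmult_le_compat_l (c0 * Y) _ _ ltac:(nra) HC).
      assert (h2 := Rmult_le_compat_l (P * Y) _ _ ltac:(nra) HD).
      assert (h3 := Rmult_le_compat_l X _ _ H HD).
      assert (h4 := Rmult_le_compat_l (1 + P * P + c0 * P) _ _ ltac:(nra) Hxy).
      lra. }
    assert (0 <= X * X + Y * Y) by nra.
    apply Rmult_le_reg_l with c0; auto.
    replace (c0 * (((1 + 2 * P + P * P + P * c0) / c0 + 1) * (X * X + Y * Y)))
      with ((1 + 2 * P + P * P + P * c0) * (X * X + Y * Y) + c0 * (X * X + Y * Y)) by (field; lra).
    assert (0 <= c0 * (X * X + Y * Y)) by (apply Rmult_le_pos; lra).
    lra. }
  assert (HE0 : forall x, 0 <= E x) by (intros; unfold E; nra).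
  assert (HEz : E z = 0) by (unfold E; rewrite Hhz; unfold B; rewrite HBz; ring).
  assert (HK0 : 0 < K).
  { unfold K. assert (0 <= P) by (unfold P; lra). assert (0 < (1 + 2 * P + P * P + P * c0) / c0).
    apply Rdiv_lt_0_compat; nra. lra. }
  assert (Ex : forall x, a <= x <= b -> E x = 0).
  { intros x Hx. destruct (Rle_lt_dec z x) as [Hzx|Hzx].
    - set (F := fun t => E t * exp (- K * (t - z))).
      assert (HF : C1_on z x F (fun t => dE t * exp (- K * (t - z)) + E t * (- K * exp (- K * (t - z))))).
      { apply C1_mult; auto. eapply C1_sub; eauto; lra. apply C1_exp. }
      assert (I1 := FTC z x _ _ Hzx HF).
      assert (I2 : RInt (fun t => dE t * exp (- K * (t - z)) + E t * (- K * exp (- K * (t - z)))) z x <= 0).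
      { apply RInt_le0_on; auto. apply HF. intros t Ht.
        assert (Rabs (dE t) <= K * E t) by (apply HK; lra).
        assert (0 < exp (- K * (t - z))) by apply exp_pos.
        apply Rabs_le_between in H. nra. }
      unfold F in I1. rewrite HEz, Rminus_diag, Rmult_0_r, exp_0 in I1.
      assert (0 < exp (- K * (x - z))) by apply exp_pos.
      specialize (HE0 x). nra.
    - set (F := fun t => E t * exp (K * (t - z))).
      assert (HF : C1_on x z F (fun t => dE t * exp (K * (t - z)) + E t * (K * exp (K * (t - z))))).
      { apply C1_mult; try lra. eapply C1_sub; eauto; lra. apply C1_exp. }
      assert (I1 := FTC x z _ _ ltac:(lra) HF).
      assert (I2 : 0 <= RInt (fun t => dE t * exp (K * (t - z)) + E t * (K * exp (K * (t - z)))) x z).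
      { apply RInt_ge0_on; try lra. apply HF. intros t Ht.
        assert (Rabs (dE t) <= K * E t) by (apply HK; lra).
        assert (0 < exp (K * (t - z))) by apply exp_pos.
        apply Rabs_le_between in H. nra. }
      unfold F in I1. rewrite HEz, Rminus_diag, Rmult_0_r, exp_0 in I1.
      assert (0 < exp (K * (x - z))) by apply exp_pos.
      specialize (HE0 x). nra. }
  intros x Hx. specialize (Ex x Hx). unfold E in Ex. nra.
Qed.

Lemma cont_along a b G u0 du0 : cont3 G -> C1_on a b u0 du0 -> cont_on a b (along G u0 du0).
Proof. intros HG Hu. unfold along. apply cont_on_cont3; auto. eapply C1_cont; eauto. apply Hu. Qed.

Lemma nec a b f u0 du0 : a < b -> Ck3 3 f -> C1_on a b u0 du0 ->
  (forall x, a <= x <= b ->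
     deriv_within a b (along (fp f) u0 du0) x (along (fu f) u0 du0 x)) ->
  along (fp f) u0 du0 a = 0 -> along (fp f) u0 du0 b = 0 ->
  weak_minimizer a b f u0 du0 ->
  forall e de, C1_on a b e de -> 0 <= Qf f u0 du0 a b e de.
Proof.
  intros Hab Hf Hu0 Hext Ha Hb [eps0 [Heps0 Hwm]] e de He.
  destruct (Ck3_3_conts f Hf) as [Cf [Cfp [Cfu [Cfpp [Cfpu [Cfup Cfuu]]]]]].
  assert (Cpp := cont_along a b _ u0 du0 Cfpp Hu0).
  assert (Cpu := cont_along a b _ u0 du0 Cfpu Hu0).
  assert (Cuu := cont_along a b _ u0 du0 Cfuu Hu0).
  assert (Ce : cont_on a b e) by (eapply C1_cont; eauto).
  assert (Cde : cont_on a b de) by apply He.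
  destruct (Rle_lt_dec 0 (Qf f u0 du0 a b e de)) as [ok|Hneg]; auto. exfalso.
  set (Q := Qf f u0 du0 a b e de) in *.
  set (N := Nf a b e de).
  assert (HN : 0 <= N) by (apply Nf_ge0; auto; lra).
  set (eps := - Q / (4 * (N + 1))).
  assert (Heps : 0 < eps) by (unfold eps; apply Rdiv_lt_0_compat; lra).
  destruct (KL a b f u0 du0 Hab Hf Hu0 Hext Ha Hb eps Heps) as [dl [Hdl HKL]].
  destruct (cont_on_bounded a b e ltac:(lra) Ce) as [Me [HMe BMe]].
  destruct (cont_on_bounded a b de ltac:(lra) Cde) as [Md [HMd BMd]].
  set (t := Rmin (Rmin (dl / Me) (dl / Md)) (eps0 / (2 * (Me + Md)))).
  assert (Ht0 : 0 < t).
  { unfold t. repeat apply Rmin_pos; apply Rdiv_lt_0_compat; lra. }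
  assert (Ht1 : t * Me <= dl).
  { assert (t <= dl / Me) by (unfold t; eapply Rle_trans; [apply Rmin_l | apply Rmin_l]).
    apply Rmult_le_compat_r with (r := Me) in H; try lra. unfold Rdiv in H.
    rewrite Rmult_assoc, Rinv_l, Rmult_1_r in H; lra. }
  assert (Ht2 : t * Md <= dl).
  { assert (t <= dl / Md) by (unfold t; eapply Rle_trans; [apply Rmin_l | apply Rmin_r]).
    apply Rmult_le_compat_r with (r := Md) in H; try lra. unfold Rdiv in H.
    rewrite Rmult_assoc, Rinv_l, Rmult_1_r in H; lra. }
  assert (Ht3 : t * (Me + Md) < eps0).
  { assert (t <= eps0 / (2 * (Me + Md))) by (unfold t; apply Rmin_r).
    apply Rmult_le_compat_r with (r := Me + Md) in H; try lra. unfold Rdiv in H.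
    replace (eps0 * / (2 * (Me + Md)) * (Me + Md)) with (eps0 / 2) in H by (field; lra). lra. }
  assert (Het : C1_on a b (fun x => t * e x) (fun x => t * de x)) by (apply C1_scal; auto; lra).
  assert (Hmin : Phi a b f u0 du0 <= Phi a b f (fun x => u0 x + t * e x) (fun x => du0 x + t * de x)).
  { apply Hwm. apply C1_plus; auto; lra.
    exists (t * Me), (t * Md). split. lra.
    intros x Hx. replace (u0 x + t * e x - u0 x) with (t * e x) by ring.
    replace (du0 x + t * de x - du0 x) with (t * de x) by ring.
    rewrite !Rabs_mult, (Rabs_pos_eq t) by lra. split; apply Rmult_le_compat_l; try lra; auto. }
  assert (HK := HKL (fun x => t * e x) (fun x => t * de x) Het).
  assert (Hb2 : forall x, a <= x <= b -> Rabs (t * e x) <= dl /\ Rabs (t * de x) <= dl).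
  { intros x Hx. rewrite !Rabs_mult, (Rabs_pos_eq t) by lra.
    split. apply Rle_trans with (t * Me); auto. apply Rmult_le_compat_l; auto; lra.
    apply Rle_trans with (t * Md); auto. apply Rmult_le_compat_l; auto; lra. }
  specialize (HK Hb2).
  assert (EQ : Qf f u0 du0 a b (fun x => t * e x) (fun x => t * de x) = t ^ 2 * Q).
  { unfold Q, Qf. rewrite <- RInt_scal_on; try lra. apply RInt_ext_on; try lra. intros; ring.
    cont_tac. }
  assert (EN : Nf a b (fun x => t * e x) (fun x => t * de x) = t ^ 2 * N).
  { unfold N, Nf. rewrite <- RInt_scal_on; try lra. apply RInt_ext_on; try lra. intros; ring.
    cont_tac. }
  rewrite EQ, EN in HK. apply Rabs_le_between in HK.
  assert (eps * N <= - Q / 4).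
  { unfold eps. apply Rmult_le_reg_r with (4 * (N + 1)). lra.
    replace (- Q / (4 * (N + 1)) * N * (4 * (N + 1))) with (- Q * N) by (field; lra).
    replace (- Q / 4 * (4 * (N + 1))) with (- Q * N - Q) by field. lra. }
  assert (0 < t ^ 2) by (apply pow_lt; lra).
  assert (t ^ 2 * (eps * N) <= t ^ 2 * (- Q / 4)) by (apply Rmult_le_compat_l; lra).
  assert (t ^ 2 * Q < 0) by nra.
  lra.
Qed.

Lemma coerc a b h dh : a < b -> C1_on a b h dh -> (forall x, a <= x <= b -> h x <> 0) ->
  exists K1 K2, 0 < K1 /\ 0 < K2 /\ forall e de, C1_on a b e de ->
    (forall x, a <= x <= b -> e x ^ 2 <= K1 * (e b ^ 2 + RInt (fun x => (de x - dh x * / h x * e x) ^ 2) a b)) /\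
    Nf a b e de <= K2 * (e b ^ 2 + RInt (fun x => (de x - dh x * / h x * e x) ^ 2) a b).
Proof.
  intros Hab Hh Hnz.
  assert (Ch : cont_on a b h) by (eapply C1_cont; eauto).
  assert (Cdh : cont_on a b dh) by apply Hh.
  assert (Cih : cont_on a b (fun x => / h x)) by (apply cont_on_inv; auto; lra).
  destruct (cont_on_min_pos a b h ltac:(lra) Ch Hnz) as [m [Hm Bm]].
  destruct (cont_on_bounded a b h ltac:(lra) Ch) as [Mh [HMh BMh]].
  destruct (cont_on_bounded a b (fun x => dh x * / h x) ltac:(lra) ltac:(cont_tac)) as [Rr [HRr BRr]].
  set (K1 := Mh ^ 2 * (2 + 4 * (b - a)) / m ^ 2).
  assert (HK1 : 0 < K1) by (unfold K1; apply Rdiv_lt_0_compat; [apply Rmult_lt_0_compat; [nra|lra] | nra]).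
  set (K2 := (b - a) * (1 + 2 * Rr ^ 2) * K1 + 2).
  assert (HK2 : 0 < K2) by (unfold K2; assert (0 < (b - a) * (1 + 2 * Rr ^ 2) * K1) by (apply Rmult_lt_0_compat; nra); lra).
  exists K1, K2. split; auto. split; auto.
  intros e de He.
  assert (Ce : cont_on a b e) by (eapply C1_cont; eauto).
  assert (Cde : cont_on a b de) by apply He.
  set (zeta := fun x => de x - dh x * / h x * e x).
  assert (Cz : cont_on a b zeta) by (unfold zeta; cont_tac).
  set (Z := RInt (fun x => zeta x ^ 2) a b).
  change (RInt (fun x => (de x - dh x * / h x * e x) ^ 2) a b) with Z.
  assert (HZ : 0 <= Z) by (apply RInt_ge0_on; [lra| cont_tac | intros; nra]).
  set (q := fun x => e x * / h x).
  set (dq := fun x => de x * / h x + e x * (- dh x / h x ^ 2)).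
  assert (Hq : C1_on a b q dq) by (apply C1_mult; [lra | auto | apply C1_inv; auto; lra]).
  assert (Cq : cont_on a b q) by (eapply C1_cont; eauto).
  assert (Hdq : forall x, a <= x <= b -> dq x = zeta x * / h x).
  { intros x Hx. unfold dq, zeta. field. auto. }
  assert (Hdq2 : forall x, a <= x <= b -> dq x ^ 2 <= zeta x ^ 2 / m ^ 2).
  { intros x Hx. rewrite Hdq; auto. specialize (Bm x Hx). specialize (Hnz x Hx).
    assert (0 < Rabs (h x)) by lra.
    replace ((zeta x * / h x) ^ 2) with (zeta x ^ 2 / Rabs (h x) ^ 2).
    2:{ rewrite pow2_abs. field. auto. }
    apply Rmult_le_compat_l. nra. apply Rinv_le_contravar; nra. }
  set (lam := / (2 * (b - a))).
  assert (Hlam : 0 < lam) by (unfold lam; apply Rinv_0_lt_compat; lra).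
  assert (Hlb : lam * (2 * (b - a)) = 1) by (unfold lam; field; lra).
  assert (Hinv : / (lam * m ^ 2) = 2 * (b - a) / m ^ 2) by (unfold lam; field; split; nra).
  assert (Hl2 : 1 - (b - a) * lam = / 2) by (unfold lam; field; lra).
  clearbody lam.
  set (P := fun x => lam * q x ^ 2 + / (lam * m ^ 2) * zeta x ^ 2).
  assert (CP : cont_on a b P) by (unfold P; cont_tac).
  set (SS := RInt (fun x => q x ^ 2) a b).
  assert (HIP : RInt P a b = lam * SS + / (lam * m ^ 2) * Z).
  { unfold P, SS, Z. rewrite RInt_plus_on; try lra; try cont_tac. rewrite !RInt_scal_on; try lra; try cont_tac. }
  assert (PB : forall x, a <= x <= b -> q x ^ 2 <= q b ^ 2 + (lam * SS + / (lam * m ^ 2) * Z)).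
  { intros x Hx. rewrite <- HIP.
    assert (Hq2 : C1_on x b (fun t => q t * q t) (fun t => dq t * q t + q t * dq t)).
    { apply C1_mult. lra. eapply C1_sub; eauto; lra. eapply C1_sub; eauto; lra. }
    assert (F1 := FTC x b _ _ ltac:(lra) Hq2).
    assert (Cg : cont_on x b (fun t => dq t * q t + q t * dq t)) by apply Hq2.
    assert (CPx : cont_on x b P) by (apply (cont_on_sub a b x b P); auto; lra).
    assert (F2 : RInt (fun t => -1 * (dq t * q t + q t * dq t)) x b <= RInt P x b).
    { apply RInt_le_on; try lra; try cont_tac. intros t Ht.
      assert (Ht' : a <= t <= b) by lra.
      specialize (Hdq2 t Ht'). unfold P.
      assert (0 <= (lam * q t + dq t) ^ 2) by apply pow2_ge_0.
      assert (lam * (dq t) ^ 2 / lam = dq t ^ 2) by (field; lra).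
      assert (dq t ^ 2 / lam <= / (lam * m ^ 2) * zeta t ^ 2).
      { replace (/ (lam * m ^ 2) * zeta t ^ 2) with ((zeta t ^ 2 / m ^ 2) / lam) by (field; lra).
        unfold Rdiv. apply Rmult_le_compat_r. left; apply Rinv_0_lt_compat; lra. exact Hdq2. }
      assert (- 2 * (q t * dq t) <= lam * q t ^ 2 + dq t ^ 2 / lam).
      { apply Rmult_le_reg_l with lam; auto.
        replace (lam * (lam * q t ^ 2 + dq t ^ 2 / lam)) with (lam * lam * q t ^ 2 + dq t ^ 2) by (field; lra).
        nra. }
      lra. }
    rewrite RInt_scal_on in F2; try lra; auto.
    assert (F3 : RInt P x b <= RInt P a b).
    { rewrite <- (RInt_chasles_on a x b P); try lra; auto.
      assert (0 <= RInt P a x).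
      { apply RInt_ge0_on; try lra. apply (cont_on_sub a b a x P); auto; lra.
        intros t Ht. unfold P. assert (0 <= / (lam * m ^ 2)) by (left; apply Rinv_0_lt_compat; apply Rmult_lt_0_compat; auto; apply pow_lt; auto).
        apply Rplus_le_le_0_compat; apply Rmult_le_pos; try lra; apply pow2_ge_0. }
      lra. }
    simpl in F1. lra. }
  assert (HS : SS <= (b - a) * (q b ^ 2 + (lam * SS + / (lam * m ^ 2) * Z))).
  { unfold SS at 1. rewrite <- RInt_const_on. apply RInt_le_on; try lra; try cont_tac. }
  assert (HS2 : lam * SS <= q b ^ 2 + / (lam * m ^ 2) * Z).
  { assert (HS' : SS * (1 - (b - a) * lam) <= (b - a) * (q b ^ 2 + / (lam * m ^ 2) * Z)) by nra.
    rewrite Hl2 in HS'.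
    apply Rmult_le_compat_l with (r := 2 * lam) in HS'; try lra.
    replace (2 * lam * (SS * / 2)) with (lam * SS) in HS' by field.
    replace (2 * lam * ((b - a) * (q b ^ 2 + / (lam * m ^ 2) * Z))) with (q b ^ 2 + / (lam * m ^ 2) * Z) in HS'
      by (transitivity (lam * (2 * (b - a)) * (q b ^ 2 + / (lam * m ^ 2) * Z)); [rewrite Hlb; ring | ring]).
    auto. }
  assert (Hqb : q b ^ 2 <= e b ^ 2 / m ^ 2).
  { unfold q. assert (Hb' : a <= b <= b) by lra. specialize (Bm b Hb'). specialize (Hnz b Hb').
    replace ((e b * / h b) ^ 2) with (e b ^ 2 / Rabs (h b) ^ 2) by (rewrite pow2_abs; field; auto).
    apply Rmult_le_compat_l. nra. apply Rinv_le_contravar; nra. }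
  assert (Hex : forall x, a <= x <= b -> e x ^ 2 <= K1 * (e b ^ 2 + Z)).
  { intros x Hx. specialize (PB x Hx).
    assert (Hqx : q x ^ 2 <= 2 * (e b ^ 2 / m ^ 2) + 4 * (b - a) / m ^ 2 * Z).
    { rewrite Hinv in PB, HS2.
      replace (4 * (b - a) / m ^ 2 * Z) with (2 * (2 * (b - a) / m ^ 2 * Z)) by (field; nra).
      lra. }
    assert (E1 : e x ^ 2 = h x ^ 2 * q x ^ 2) by (unfold q; field; auto).
    rewrite E1. specialize (BMh x Hx). rewrite <- (pow2_abs (h x)).
    assert (Rabs (h x) ^ 2 <= Mh ^ 2) by (apply pow_incr; split; [apply Rabs_pos|auto]).
    assert (0 <= q x ^ 2) by nra.
    apply Rle_trans with (Mh ^ 2 * q x ^ 2). apply Rmult_le_compat_r; auto.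
    unfold K1.
    assert (0 <= e b ^ 2) by nra.
    assert (Hm2 : 0 < m ^ 2) by nra.
    apply Rle_trans with (Mh ^ 2 * (2 * (e b ^ 2 / m ^ 2) + 4 * (b - a) / m ^ 2 * Z)).
    apply Rmult_le_compat_l; auto. nra.
    replace (Mh ^ 2 * (2 + 4 * (b - a)) / m ^ 2 * (e b ^ 2 + Z))
      with (Mh ^ 2 * ((2 + 4 * (b - a)) * e b ^ 2 / m ^ 2 + (2 + 4 * (b - a)) / m ^ 2 * Z)) by (field; lra).
    apply Rmult_le_compat_l. nra.
    apply Rplus_le_compat.
    - unfold Rdiv. rewrite !Rmult_assoc. apply Rmult_le_compat_r. 
      apply Rmult_le_pos; auto. left; apply Rinv_0_lt_compat; auto. lra.
    - apply Rmult_le_compat_r; auto. unfold Rdiv. apply Rmult_le_compat_r.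
      left; apply Rinv_0_lt_compat; auto. lra. }
  split; auto.
  unfold Nf.
  apply Rle_trans with (RInt (fun x => (1 + 2 * Rr ^ 2) * (K1 * (e b ^ 2 + Z)) + 2 * zeta x ^ 2) a b).
  { apply RInt_le_on; try lra; try cont_tac. intros x Hx.
    specialize (Hex x Hx). specialize (BRr x Hx).
    assert (Ed : de x = zeta x + dh x * / h x * e x) by (unfold zeta; ring).
    rewrite Ed. set (r := dh x * / h x) in *.
    assert (r ^ 2 <= Rr ^ 2) by (rewrite <- (pow2_abs r); apply pow_incr; split; [apply Rabs_pos|auto]).
    assert (0 <= e x ^ 2) by nra.
    assert (r ^ 2 * e x ^ 2 <= Rr ^ 2 * (K1 * (e b ^ 2 + Z))).
    { apply Rle_trans with (Rr ^ 2 * e x ^ 2). apply Rmult_le_compat_r; auto.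
      apply Rmult_le_compat_l; auto. nra. }
    assert ((zeta x + r * e x) ^ 2 <= 2 * zeta x ^ 2 + 2 * (r ^ 2 * e x ^ 2)).
    { assert (0 <= (zeta x - r * e x) ^ 2) by apply pow2_ge_0. lra. }
    lra. }
  rewrite RInt_plus_on; try lra; try cont_tac. rewrite RInt_const_on, RInt_scal_on; try lra; try cont_tac.
  fold Z. unfold K2.
  assert (0 <= e b ^ 2) by apply pow2_ge_0.
  lra.
Qed.

Lemma schwarz_along f u0 du0 x : Ck3 3 f -> along (fup f) u0 du0 x = along (fpu f) u0 du0 x.
Proof. intros Hf. unfold along, fup, fpu. symmetry. apply schwarz3; auto. Qed.

Lemma suff a b f u0 du0 h dh c0 : a < b -> Ck3 3 f -> C1_on a b u0 du0 ->
  (forall x, a <= x <= b ->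
     deriv_within a b (along (fp f) u0 du0) x (along (fu f) u0 du0 x)) ->
  along (fp f) u0 du0 a = 0 -> along (fp f) u0 du0 b = 0 -> 0 < c0 ->
  (forall x, a <= x <= b -> c0 <= along (fpp f) u0 du0 x) ->
  C1_on a b h dh ->
  (forall x, a <= x <= b -> deriv_within a b (Bop f u0 du0 h dh) x (Cop f u0 du0 h dh x)) ->
  (forall x, a <= x <= b -> h x <> 0) ->
  Bop f u0 du0 h dh a = 0 -> Bop f u0 du0 h dh b * h b > 0 ->
  strict_weak_minimizer a b f u0 du0.
Proof.
  intros Hab Hf Hu0 Hext Ha Hb Hc0 Hpp Hh HB Hnz HBa HBb.
  destruct (Ck3_3_conts f Hf) as [Cf [Cfp [Cfu [Cfpp [Cfpu [Cfup Cfuu]]]]]].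
  assert (Cpp := cont_along a b _ u0 du0 Cfpp Hu0).
  assert (Cpu := cont_along a b _ u0 du0 Cfpu Hu0).
  assert (Cup := cont_along a b _ u0 du0 Cfup Hu0).
  assert (Cuu := cont_along a b _ u0 du0 Cfuu Hu0).
  assert (Ch : cont_on a b h) by (eapply C1_cont; eauto).
  assert (Cdh : cont_on a b dh) by apply Hh.
  set (B := Bop f u0 du0 h dh) in *. set (C := Cop f u0 du0 h dh) in *.
  assert (CC : cont_on a b C) by (unfold C, Cop; cont_tac).
  assert (HB1 : C1_on a b B C) by (split; auto).
  destruct (coerc a b h dh Hab Hh Hnz) as [K1 [K2 [HK1 [HK2 HK]]]].
  set (wb := B b * / h b).
  assert (Hwb : 0 < wb).
  { unfold wb. assert (Hb' : h b <> 0) by (apply Hnz; lra).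
    replace (B b * / h b) with ((B b * h b) * / (h b) ^ 2) by (field; auto).
    apply Rmult_lt_0_compat; auto. apply Rinv_0_lt_compat. apply pow2_gt_0; auto. }
  (* Picone *)
  assert (Pic : forall e de, C1_on a b e de ->
     c0 * RInt (fun x => (de x - dh x * / h x * e x) ^ 2) a b + wb * e b ^ 2 <= Qf f u0 du0 a b e de).
  { intros e de He.
    assert (Ce : cont_on a b e) by (eapply C1_cont; eauto).
    assert (Cde : cont_on a b de) by apply He.
    assert (Cih : cont_on a b (fun x => / h x)) by (apply cont_on_inv; auto; lra).
    set (w := fun x => B x * / h x).
    set (dw := fun x => C x * / h x + B x * (- dh x / h x ^ 2)).
    assert (Hw : C1_on a b w dw) by (apply C1_mult; [lra | auto | apply C1_inv; auto; lra]).
    set (G := fun x => w x * (e x * e x)).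
    set (dG := fun x => dw x * (e x * e x) + w x * (de x * e x + e x * de x)).
    assert (HG : C1_on a b G dG) by (apply C1_mult; [lra | auto | apply C1_mult; auto; lra]).
    assert (FG := FTC a b G dG ltac:(lra) HG).
    assert (CdG : cont_on a b dG) by apply HG.
    set (zeta := fun x => de x - dh x * / h x * e x).
    assert (Cz : cont_on a b zeta) by (unfold zeta; cont_tac).
    assert (EQ : Qf f u0 du0 a b e de = RInt (fun x => along (fpp f) u0 du0 x * zeta x ^ 2) a b + RInt dG a b).
    { unfold Qf. rewrite <- RInt_plus_on; try lra; try cont_tac.
      apply RInt_ext_on; try lra. intros x Hx.
      unfold dG, dw, w, zeta, B, C, Bop, Cop. rewrite schwarz_along; auto.
      field. apply Hnz; auto. }
    rewrite EQ, FG. unfold G, w. rewrite HBa.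
    fold wb.
    assert (c0 * RInt (fun x => (de x - dh x * / h x * e x) ^ 2) a b
            <= RInt (fun x => along (fpp f) u0 du0 x * zeta x ^ 2) a b).
    { rewrite <- RInt_scal_on; try lra; try cont_tac.
      apply RInt_le_on; try lra; try cont_tac. intros x Hx.
      apply Rmult_le_compat_r. apply pow2_ge_0. auto. }
    replace (wb * (e b * e b)) with (wb * e b ^ 2) by ring. lra. }
  set (mn := Rmin c0 wb).
  assert (Hmn : 0 < mn) by (apply Rmin_pos; lra).
  assert (Hmn1 : mn <= c0) by apply Rmin_l. assert (Hmn2 : mn <= wb) by apply Rmin_r.
  set (eps := mn / (4 * K2)).
  assert (Heps : 0 < eps) by (unfold eps; apply Rdiv_lt_0_compat; lra).
  destruct (KL a b f u0 du0 Hab Hf Hu0 Hext Ha Hb eps Heps) as [dl [Hdl HKL]].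
  exists dl. split; auto.
  intros v dv Hv [M1 [M2 [HM HMb]]] [x0 [Hx0 Hvx0]].
  set (e := fun x => v x - u0 x). set (de := fun x => dv x - du0 x).
  assert (He : C1_on a b e de).
  { eapply C1_ext. apply (C1_plus a b v dv (fun x => -1 * u0 x) (fun x => -1 * du0 x)); try lra; auto.
    apply C1_scal; auto; lra. intros; unfold e; ring. intros; unfold de; ring. }
  pose proof (HMb a ltac:(lra)) as [Ma1 Ma2].
  assert (HM1 : 0 <= M1) by (eapply Rle_trans; [apply Rabs_pos | eauto]).
  assert (HM2 : 0 <= M2) by (eapply Rle_trans; [apply Rabs_pos | eauto]).
  assert (Hbd : forall x, a <= x <= b -> Rabs (e x) <= dl /\ Rabs (de x) <= dl).
  { intros x Hx. destruct (HMb x Hx). unfold e, de. split; lra. }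
  specialize (HKL e de He Hbd).
  assert (EPhi : Phi a b f (fun x => u0 x + e x) (fun x => du0 x + de x) = Phi a b f v dv).
  { unfold Phi. apply RInt_ext_on; try lra. intros x Hx. unfold e, de.
    replace (u0 x + (v x - u0 x)) with (v x) by ring. replace (du0 x + (dv x - du0 x)) with (dv x) by ring.
    reflexivity. }
  rewrite EPhi in HKL. apply Rabs_le_between in HKL.
  destruct (HK e de He) as [Hpt HN].
  set (Z := RInt (fun x => (de x - dh x * / h x * e x) ^ 2) a b) in *.
  assert (HZ : 0 <= Z).
  { apply RInt_ge0_on; try lra. assert (cont_on a b e) by (eapply C1_cont; eauto).
    assert (cont_on a b de) by apply He.
    assert (cont_on a b (fun x => / h x)) by (apply cont_on_inv; auto; lra). cont_tac.
    intros; apply pow2_ge_0. }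
  assert (HQ := Pic e de He). fold Z in HQ.
  set (T := e b ^ 2 + Z).
  assert (HT : 0 <= T) by (unfold T; assert (0 <= e b ^ 2) by apply pow2_ge_0; lra).
  assert (HQ2 : mn * T <= Qf f u0 du0 a b e de).
  { unfold T. assert (0 <= e b ^ 2) by apply pow2_ge_0.
    assert (mn * Z <= c0 * Z) by (apply Rmult_le_compat_r; auto).
    assert (mn * e b ^ 2 <= wb * e b ^ 2) by (apply Rmult_le_compat_r; auto). lra. }
  assert (HN2 : eps * Nf a b e de <= mn / 4 * T).
  { apply Rle_trans with (eps * (K2 * T)). apply Rmult_le_compat_l. lra. exact HN.
    unfold eps. right. field. lra. }
  destruct (Req_dec T 0) as [T0|T0].
  - exfalso. apply Hvx0. specialize (Hpt x0 Hx0). fold T in Hpt. rewrite T0, Rmult_0_r in Hpt.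
    assert (E2 : Rsqr (e x0) = 0) by (unfold Rsqr; pose proof (pow2_ge_0 (e x0)); simpl in *; lra).
    apply Rsqr_0_uniq in E2. unfold e in E2. lra.
  - assert (0 < mn / 4 * T) by (apply Rmult_lt_0_compat; lra).
    lra.
Qed.

Definition Sm (t : R) := 1 - 3 * t ^ 2 + 2 * t ^ 3.
Definition dSm (t : R) := - 6 * t + 6 * t ^ 2.

Lemma Sm_C1 : C1_on 0 1 Sm dSm.
Proof.
  apply C1_smooth.
  - intros t. unfold Sm, dSm. auto_derive. exact I. simpl. rring.
  - intros t. apply (@ex_derive_continuous R_AbsRing R_NormedModule). unfold dSm. auto_derive. exact I.
Qed.

Definition chi (y dl x : R) := ext 0 1 Sm dSm ((x - (y - dl)) / dl).
Definition dchi (y dl x : R) := dSm (clamp 0 1 ((x - (y - dl)) / dl)) / dl.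

Lemma chi_C1 c d y dl : 0 < dl -> C1_on c d (chi y dl) (dchi y dl).
Proof.
  intros Hdl. apply C1_smooth.
  - intros t. unfold chi, dchi.
    apply is_derive_eq with (scal (/ dl) (dSm (clamp 0 1 ((t - (y - dl)) / dl)))).
    apply (is_derive_comp (ext 0 1 Sm dSm) (fun x => (x - (y - dl)) / dl)).
    apply ext_derive; [lra | apply Sm_C1].
    auto_derive. exact I. simpl. field. lra.
    unfold scal; simpl; unfold mult; simpl. field; lra.
  - intros t. unfold dchi. apply (continuous_mult (fun t => dSm (clamp 0 1 ((t - (y - dl)) / dl))) (fun _ => / dl)).
    apply (continuous_comp (fun t => (t - (y - dl)) / dl) (fun t => dSm (clamp 0 1 t))).
    apply (@ex_derive_continuous R_AbsRing R_NormedModule). auto_derive. exact I.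
    apply cont_on_clamp. lra. apply Sm_C1. apply continuous_const.
Qed.

Lemma chi_left y dl x : 0 < dl -> x <= y - dl -> chi y dl x = 1 /\ dchi y dl x = 0.
Proof.
  intros Hdl Hx. unfold chi, dchi, ext.
  assert (H0 : (x - (y - dl)) / dl <= 0).
  { unfold Rdiv. rewrite <- (Rmult_0_l (/ dl)). apply Rmult_le_compat_r.
    left; apply Rinv_0_lt_compat; lra. lra. }
  assert (E : clamp 0 1 ((x - (y - dl)) / dl) = 0) by (unfold clamp, Rmax, Rmin; repeat destruct Rle_dec; lra).
  rewrite E. unfold Sm, dSm. split; field; lra.
Qed.

Lemma chi_right y dl x : 0 < dl -> y <= x -> chi y dl x = 0 /\ dchi y dl x = 0.
Proof.
  intros Hdl Hx. unfold chi, dchi, ext.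
  assert (H0 : 1 <= (x - (y - dl)) / dl).
  { unfold Rdiv. rewrite <- (Rinv_r dl) by lra. apply Rmult_le_compat_r.
    left; apply Rinv_0_lt_compat; lra. lra. }
  assert (E : clamp 0 1 ((x - (y - dl)) / dl) = 1) by (unfold clamp, Rmax, Rmin; repeat destruct Rle_dec; lra).
  rewrite E. unfold Sm, dSm. split; field; lra.
Qed.

Lemma chi_bounds y dl x : 0 < dl -> Rabs (chi y dl x) <= 1 /\ Rabs (dchi y dl x) <= 2 / dl.
Proof.
  intros Hdl. unfold chi, dchi, ext.
  set (t := (x - (y - dl)) / dl).
  assert (Hc := clamp_in 0 1 t ltac:(lra)).
  set (ct := clamp 0 1 t) in *.
  assert (HdS : Rabs (dSm ct) <= 2).
  { unfold dSm. apply Rabs_le. destruct Hc as [H1 H2]. split; nra. }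
  split.
  - destruct (Rle_dec t 0) as [T0|T0]; [|destruct (Rle_dec 1 t) as [T1|T1]].
    + assert (ct = 0) by (unfold ct, clamp, Rmax, Rmin; repeat destruct Rle_dec; lra).
      rewrite H. unfold Sm, dSm. replace (1 - 3 * 0 ^ 2 + 2 * 0 ^ 3 + (t - 0) * (- 6 * 0 + 6 * 0 ^ 2)) with 1 by ring.
      rewrite Rabs_R1; lra.
    + assert (ct = 1) by (unfold ct, clamp, Rmax, Rmin; repeat destruct Rle_dec; lra).
      rewrite H. unfold Sm, dSm. replace (1 - 3 * 1 ^ 2 + 2 * 1 ^ 3 + (t - 1) * (- 6 * 1 + 6 * 1 ^ 2)) with 0 by ring.
      rewrite Rabs_R0; lra.
    + assert (ct = t) by (unfold ct; apply clamp_id; lra).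
      rewrite H, Rminus_diag, Rmult_0_l, Rplus_0_r. unfold Sm. apply Rabs_le. split; nra.
  - unfold Rdiv. rewrite Rabs_mult, Rabs_inv, (Rabs_pos_eq dl) by lra.
    apply Rmult_le_compat_r; auto. left; apply Rinv_0_lt_compat; lra.
Qed.

Lemma lip a b g dg L c d : C1_on a b g dg -> a <= c -> c <= d -> d <= b ->
  (forall x, c <= x <= d -> Rabs (dg x) <= L) -> Rabs (g d - g c) <= L * (d - c).
Proof.
  intros Hg H1 H2 H3 HL.
  rewrite <- (FTC c d g dg H2 (C1_sub a b c d g dg H1 H3 Hg)).
  apply RInt_bound; auto. apply (cont_on_sub a b); auto. apply Hg.
Qed.

Lemma quad_bound p q r u du P Q' Rr Mu Md :
  Rabs p <= P -> Rabs q <= Q' -> Rabs r <= Rr -> Rabs u <= Mu -> Rabs du <= Md ->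
  Rabs (p * du ^ 2 + 2 * q * u * du + r * u ^ 2) <= P * Md ^ 2 + 2 * Q' * Mu * Md + Rr * Mu ^ 2.
Proof.
  intros Hp Hq Hr Hu Hdu.
  assert (A1 : Rabs (p * du ^ 2) <= P * Md ^ 2).
  { rewrite Rabs_mult, <- RPow_abs. apply Rmult_le_compat; try apply Rabs_pos.
    apply pow_le, Rabs_pos. auto. apply pow_incr; split; auto; apply Rabs_pos. }
  assert (A2 : Rabs (2 * q * u * du) <= 2 * Q' * Mu * Md).
  { rewrite !Rabs_mult, Rabs_pos_eq by lra.
    pose proof (Rabs_pos q); pose proof (Rabs_pos u); pose proof (Rabs_pos du).
    repeat apply Rmult_le_compat; try lra; repeat apply Rmult_le_pos; lra. }
  assert (A3 : Rabs (r * u ^ 2) <= Rr * Mu ^ 2).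
  { rewrite Rabs_mult, <- RPow_abs. apply Rmult_le_compat; try apply Rabs_pos.
    apply pow_le, Rabs_pos. auto. apply pow_incr; split; auto; apply Rabs_pos. }
  eapply Rle_trans. apply Rabs_triang. eapply Rle_trans. apply Rplus_le_compat_r. apply Rabs_triang.
  lra.
Qed.

Lemma conj_not_min a b f u0 du0 h dh c0 y : a < b -> Ck3 3 f -> C1_on a b u0 du0 ->
  (forall x, a <= x <= b ->
     deriv_within a b (along (fp f) u0 du0) x (along (fu f) u0 du0 x)) ->
  along (fp f) u0 du0 a = 0 -> along (fp f) u0 du0 b = 0 -> 0 < c0 ->
  (forall x, a <= x <= b -> c0 <= along (fpp f) u0 du0 x) ->
  C1_on a b h dh ->
  (forall x, a <= x <= b -> deriv_within a b (Bop f u0 du0 h dh) x (Cop f u0 du0 h dh x)) ->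
  (exists x, a <= x <= b /\ h x <> 0) ->
  Bop f u0 du0 h dh a = 0 -> a < y <= b -> h y = 0 ->
  ~ weak_minimizer a b f u0 du0.
Proof.
  intros Hab Hf Hu0 Hext Ha Hb Hc0 Hpp Hh HB Hnt HBa Hy Hhy Hwm.
  assert (Qnn := nec a b f u0 du0 Hab Hf Hu0 Hext Ha Hb Hwm).
  destruct (Ck3_3_conts f Hf) as [Cf [Cfp [Cfu [Cfpp [Cfpu [Cfup Cfuu]]]]]].
  assert (Cpp := cont_along a b _ u0 du0 Cfpp Hu0).
  assert (Cpu := cont_along a b _ u0 du0 Cfpu Hu0).
  assert (Cup := cont_along a b _ u0 du0 Cfup Hu0).
  assert (Cuu := cont_along a b _ u0 du0 Cfuu Hu0).
  assert (Ch : cont_on a b h) by (eapply C1_cont; eauto).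
  assert (Cdh : cont_on a b dh) by apply Hh.
  assert (Hbeta : Bop f u0 du0 h dh y <> 0).
  { intros H0. destruct Hnt as [x1 [Hx1 Hhx1]]. apply Hhx1.
    apply (jac_unique a b f u0 du0 h dh c0 y); auto; lra. }
  set (B := Bop f u0 du0 h dh) in *. set (C := Cop f u0 du0 h dh) in *.
  assert (CC : cont_on a b C) by (unfold C, Cop; cont_tac).
  assert (HB1 : C1_on a b B C) by (split; auto).
  assert (CB : cont_on a b B) by (eapply C1_cont; eauto).
  set (p2 := along (fpp f) u0 du0) in *. set (pu := along (fpu f) u0 du0) in *.
  set (uu := along (fuu f) u0 du0) in *.
  destruct (cont_on_bounded a b dh ltac:(lra) Cdh) as [L [HL BL]].
  destruct (cont_on_bounded a b B ltac:(lra) CB) as [MB [HMB BMB]].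
  destruct (cont_on_bounded a b C ltac:(lra) CC) as [Lc [HLc BLc]].
  destruct (cont_on_bounded a b h ltac:(lra) Ch) as [Mh [HMh BMh]].
  destruct (cont_on_bounded a b p2 ltac:(lra) Cpp) as [P2 [HP2 BP2]].
  destruct (cont_on_bounded a b pu ltac:(lra) Cpu) as [Ppu [HPpu BPpu]].
  destruct (cont_on_bounded a b uu ltac:(lra) Cuu) as [Puu [HPuu BPuu]].
  set (U := RInt uu a b).
  set (Kmid := P2 * (3 * L) ^ 2 + 2 * Ppu * (Mh + 1) * (3 * L) + Puu * (Mh + 1) ^ 2).
  assert (HKmid : 0 < Kmid).
  { unfold Kmid. assert (0 < Puu * (Mh + 1) ^ 2) by (apply Rmult_lt_0_compat; auto; apply pow_lt; lra).
    assert (0 <= P2 * (3 * L) ^ 2) by (apply Rmult_le_pos; [lra | apply pow2_ge_0]).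
    assert (0 <= 2 * Ppu * (Mh + 1) * (3 * L)) by (repeat apply Rmult_le_pos; lra). lra. }
  set (Cst := L * MB + 2 * Lc + Kmid + Puu).
  assert (HCst : 0 < Cst) by (unfold Cst; assert (0 < L * MB) by (apply Rmult_lt_0_compat; lra); lra).
  set (beta := B y) in *.
  set (tau := / ((Rabs beta + 1) * (Rabs U + 1))).
  assert (Hab1 : 0 < Rabs beta + 1) by (pose proof (Rabs_pos beta); lra).
  assert (HU1 : 0 < Rabs U + 1) by (pose proof (Rabs_pos U); lra).
  assert (Htau : 0 < tau) by (unfold tau; apply Rinv_0_lt_compat; apply Rmult_lt_0_compat; lra).
  assert (Htb : tau * Rabs beta <= 1).
  { unfold tau. apply Rmult_le_reg_l with ((Rabs beta + 1) * (Rabs U + 1)). apply Rmult_lt_0_compat; lra.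
    rewrite <- Rmult_assoc, Rinv_r, Rmult_1_l, Rmult_1_r. 2:{ apply Rgt_not_eq, Rmult_lt_0_compat; lra. }
    pose proof (Rabs_pos U). pose proof (Rabs_pos beta). nra. }
  assert (Htu : tau * Rabs U <= 1).
  { unfold tau. apply Rmult_le_reg_l with ((Rabs beta + 1) * (Rabs U + 1)). apply Rmult_lt_0_compat; lra.
    rewrite <- Rmult_assoc, Rinv_r, Rmult_1_l, Rmult_1_r. 2:{ apply Rgt_not_eq, Rmult_lt_0_compat; lra. }
    pose proof (Rabs_pos U). pose proof (Rabs_pos beta). nra. }
  set (s := - tau * beta).
  assert (Hs : Rabs s <= 1) by (unfold s; rewrite Rabs_mult, Rabs_Ropp, Rabs_pos_eq by lra; lra).
  assert (Hb2 : 0 < beta ^ 2) by (apply pow2_gt_0; auto).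
  assert (Hsb : 2 * s * beta + s ^ 2 * U <= - tau * beta ^ 2).
  { unfold s. assert (U <= Rabs U) by apply Rle_abs.
    assert (tau * U <= 1) by (apply Rle_trans with (tau * Rabs U); auto; apply Rmult_le_compat_l; lra).
    assert (tau * beta ^ 2 * (tau * U) <= tau * beta ^ 2 * 1).
    { apply Rmult_le_compat_l; auto. apply Rmult_le_pos; lra. }
    replace (2 * (- tau * beta) * beta + (- tau * beta) ^ 2 * U) with (- 2 * (tau * beta ^ 2) + tau * beta ^ 2 * (tau * U)) by ring.
    lra. }
  set (dl := Rmin ((y - a) / 2) (tau * beta ^ 2 / (2 * Cst))).
  assert (Hdl : 0 < dl) by (unfold dl; apply Rmin_pos; [lra | apply Rdiv_lt_0_compat; [apply Rmult_lt_0_compat|]; lra]).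
  assert (Hdl1 : dl <= (y - a) / 2) by apply Rmin_l.
  assert (Hdl2 : dl * Cst <= tau * beta ^ 2 / 2).
  { apply Rle_trans with (tau * beta ^ 2 / (2 * Cst) * Cst). apply Rmult_le_compat_r. lra. apply Rmin_r.
    right; field; lra. }
  clearbody dl.
  set (u := fun x => h x * chi y dl x + s).
  set (du := fun x => dh x * chi y dl x + h x * dchi y dl x).
  assert (Hu : C1_on a b u du).
  { apply (C1_ext a b (fun x => h x * chi y dl x + s) (fun x => (dh x * chi y dl x + h x * dchi y dl x) + 0)).
    apply C1_plus. lra. apply C1_mult. lra. apply Hh. apply chi_C1; auto. apply C1_const.
    intros; unfold u; ring. intros; unfold du; ring. }
  assert (Cu : cont_on a b u) by (eapply C1_cont; eauto).
  assert (Cdu : cont_on a b du) by apply Hu.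
  specialize (Qnn u du Hu).
  set (qi := fun x => p2 x * du x ^ 2 + 2 * pu x * u x * du x + uu x * u x ^ 2).
  assert (Cqi : cont_on a b qi) by (unfold qi; cont_tac).
  assert (EQ : Qf f u0 du0 a b u du = RInt qi a (y - dl) + RInt qi (y - dl) y + RInt qi y b :> R).
  { unfold Qf. fold p2 pu uu. fold qi.
    rewrite <- (RInt_chasles_on a (y - dl) b qi); try lra; auto.
    rewrite <- (RInt_chasles_on (y - dl) y b qi); try lra.
    apply (cont_on_sub a b); auto; lra. }
  set (G := fun x => (h x + 2 * s) * B x).
  set (dG := fun x => dh x * B x + (h x + 2 * s) * C x).
  assert (HG : C1_on a (y - dl) G dG).
  { apply C1_mult. lra.
    apply (C1_ext a (y - dl) (fun x => h x + 2 * s) (fun x => dh x + 0)).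
    apply C1_plus. lra. apply (C1_sub a b); try lra; auto.
    apply C1_const. auto. intros; ring. apply (C1_sub a b); try lra; auto. }
  assert (P1 : RInt qi a (y - dl) = G (y - dl) - G a + s ^ 2 * RInt uu a (y - dl) :> R).
  { rewrite <- (FTC a (y - dl) G dG); try lra; auto.
    rewrite <- RInt_scal_on, <- RInt_plus_on; try lra. 
    apply RInt_ext_on; try lra. intros x Hx.
    destruct (chi_left y dl x Hdl ltac:(lra)) as [E1 E2].
    unfold qi, u, du, dG, B, C, Bop, Cop. rewrite E1, E2. fold p2 pu uu.
    rewrite (schwarz_along f u0 du0 x Hf). fold pu. ring.
    apply HG. apply (cont_on_sub a b); try lra. cont_tac. apply (cont_on_sub a b); try lra; auto. }
  assert (P3 : RInt qi y b = s ^ 2 * RInt uu y b :> R).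
  { rewrite <- RInt_scal_on; try lra. apply RInt_ext_on; try lra. intros x Hx.
    destruct (chi_right y dl x Hdl ltac:(lra)) as [E1 E2].
    unfold qi, u, du. rewrite E1, E2. ring. apply (cont_on_sub a b); try lra; auto. }
  assert (Huu : RInt uu a (y - dl) + RInt uu y b = U - RInt uu (y - dl) y :> R).
  { unfold U. rewrite <- (RInt_chasles_on a (y - dl) b uu); try lra; auto.
    rewrite <- (RInt_chasles_on (y - dl) y b uu); try lra.
    apply (cont_on_sub a b); auto; lra. }
  assert (Imuu : Rabs (RInt uu (y - dl) y) <= Puu * dl).
  { replace dl with (y - (y - dl)) at 2 by ring. apply RInt_bound; try lra.
    apply (cont_on_sub a b); auto; lra. intros; apply BPuu; lra. }
  assert (Hhx : forall x, y - dl <= x <= y -> Rabs (h x) <= L * dl).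
  { intros x Hx. assert (T := lip a b h dh L x y Hh ltac:(lra) ltac:(lra) ltac:(lra) ltac:(intros; apply BL; lra)).
    rewrite Hhy, Rminus_0_l, Rabs_Ropp in T. eapply Rle_trans. apply T. apply Rmult_le_compat_l; lra. }
  assert (Imid : Rabs (RInt qi (y - dl) y) <= Kmid * dl).
  { replace dl with (y - (y - dl)) at 2 by ring. apply RInt_bound; try lra.
    apply (cont_on_sub a b); auto; lra. intros x Hx.
    assert (Hx' : a <= x <= b) by lra.
    destruct (chi_bounds y dl x Hdl) as [Hc1 Hc2].
    unfold qi, Kmid. apply quad_bound; auto.
    - unfold u. eapply Rle_trans. apply Rabs_triang. rewrite Rabs_mult.
      assert (Rabs (h x) * Rabs (chi y dl x) <= Mh * 1) by (apply Rmult_le_compat; auto; apply Rabs_pos).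
      lra.
    - unfold du. eapply Rle_trans. apply Rabs_triang. rewrite !Rabs_mult.
      assert (Rabs (dh x) * Rabs (chi y dl x) <= L * 1) by (apply Rmult_le_compat; auto; apply Rabs_pos).
      assert (Rabs (h x) * Rabs (dchi y dl x) <= L * dl * (2 / dl)) by (apply Rmult_le_compat; auto; apply Rabs_pos).
      replace (L * dl * (2 / dl)) with (2 * L) in H0 by (field; lra). lra. }
  assert (HBy : Rabs (B (y - dl) - beta) <= Lc * dl).
  { unfold beta. rewrite Rabs_minus_sym. replace dl with (y - (y - dl)) at 2 by ring.
    apply (lip a b B C Lc); auto; try lra. intros; apply BLc; lra. }
  assert (HGa : G a = 0) by (unfold G; rewrite HBa; ring).
  assert (HGy : G (y - dl) <= 2 * s * beta + dl * (L * MB + 2 * Lc)).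
  { unfold G. assert (H1 := Hhx (y - dl) ltac:(lra)).
    assert (H2 := BMB (y - dl) ltac:(lra)).
    replace ((h (y - dl) + 2 * s) * B (y - dl)) with (h (y - dl) * B (y - dl) + 2 * s * beta + 2 * s * (B (y - dl) - beta)) by ring.
    assert (h (y - dl) * B (y - dl) <= L * dl * MB).
    { eapply Rle_trans. apply Rle_abs. rewrite Rabs_mult. apply Rmult_le_compat; auto; apply Rabs_pos. }
    assert (2 * s * (B (y - dl) - beta) <= 2 * (Lc * dl)).
    { eapply Rle_trans. apply Rle_abs. rewrite !Rabs_mult, Rabs_pos_eq by lra.
      replace (2 * (Lc * dl)) with (2 * 1 * (Lc * dl)) by ring.
      pose proof (Rabs_pos s). pose proof (Rabs_pos (B (y - dl) - beta)).
      apply Rmult_le_compat; lra. }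
    lra. }
  assert (Hs2 : s ^ 2 <= 1).
  { rewrite <- (pow2_abs s). replace 1 with (1 ^ 2) by ring. apply pow_incr; split; [apply Rabs_pos | auto]. }
  assert (Hs20 : 0 <= s ^ 2) by apply pow2_ge_0.
  rewrite EQ, P1, P3, HGa in Qnn.
  assert (s ^ 2 * RInt uu a (y - dl) + s ^ 2 * RInt uu y b = s ^ 2 * U - s ^ 2 * RInt uu (y - dl) y).
  { rewrite <- Rmult_plus_distr_l, Huu. ring. }
  assert (- (s ^ 2 * RInt uu (y - dl) y) <= Puu * dl).
  { apply Rabs_le_between in Imuu.
    assert (s ^ 2 * (- RInt uu (y - dl) y) <= s ^ 2 * (Puu * dl)) by (apply Rmult_le_compat_l; lra).
    assert (s ^ 2 * (Puu * dl) <= 1 * (Puu * dl)) by (apply Rmult_le_compat_r; [apply Rmult_le_pos|]; lra).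
    lra. }
  apply Rabs_le_between in Imid.
  assert (dl * Cst = dl * (L * MB + 2 * Lc) + Kmid * dl + Puu * dl) by (unfold Cst; ring).
  assert (0 < tau * beta ^ 2) by (apply Rmult_lt_0_compat; lra).
  lra.
Qed.

Theorem theorem3p3
  (a b : R) (f : R -> R -> R -> R) (u0 du0 h dh ddh : R -> R) (c0 : R) :
  a < b ->
  Ck3 3 f ->
  C1_on a b u0 du0 ->
  (* u0 is an extremal: d/dx f^0_p = f^0_u on [a,b] *)
  (forall x, a <= x <= b ->
     deriv_within a b (along (fp f) u0 du0) x (along (fu f) u0 du0 x)) ->
  along (fp f) u0 du0 a = 0 ->
  along (fp f) u0 du0 b = 0 ->
  0 < c0 ->
  (forall x, a <= x <= b -> c0 <= along (fpp f) u0 du0 x) ->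
  (* h is a nontrivial C^2 solution of the Jacobi equation with Bh(a)=0 *)
  C2_on a b h dh ddh ->
  jacobi_sol a b f u0 du0 h dh ->
  (exists x, a <= x <= b /\ h x <> 0) ->
  Bop f u0 du0 h dh a = 0 ->
  (* (i) *)
  (((exists y, a < y <= b /\ h y = 0) \/ Bop f u0 du0 h dh b * h b < 0) ->
     ~ weak_minimizer a b f u0 du0) /\
  (* (ii) *)
  (((forall y, a < y <= b -> h y <> 0) /\ Bop f u0 du0 h dh b * h b > 0) ->
     strict_weak_minimizer a b f u0 du0).
Proof.
  intros Hab Hf Hu0 Hext Ha Hb Hc0 Hpp [Hh _] Hjac Hnt HBa.
  assert (HB : forall x, a <= x <= b -> deriv_within a b (Bop f u0 du0 h dh) x (Cop f u0 du0 h dh x)).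
  { intros x Hx. destruct (Hjac x Hx) as [l [Hl El]].
    replace (Cop f u0 du0 h dh x) with l by lra. auto. }
  split.
  - intros [[y [Hy Hhy]] | Hneg].
    + apply (conj_not_min a b f u0 du0 h dh c0 y); auto.
    + intros Hwm. assert (Qnn := nec a b f u0 du0 Hab Hf Hu0 Hext Ha Hb Hwm h dh Hh).
      destruct (Ck3_3_conts f Hf) as [Cf [Cfp [Cfu [Cfpp [Cfpu [Cfup Cfuu]]]]]].
      assert (Cpp := cont_along a b _ u0 du0 Cfpp Hu0).
      assert (Cpu := cont_along a b _ u0 du0 Cfpu Hu0).
      assert (Cup := cont_along a b _ u0 du0 Cfup Hu0).
      assert (Cuu := cont_along a b _ u0 du0 Cfuu Hu0).
      assert (Ch : cont_on a b h) by (eapply C1_cont; eauto).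
      assert (Cdh : cont_on a b dh) by apply Hh.
      assert (CC : cont_on a b (Cop f u0 du0 h dh)) by (unfold Cop; cont_tac).
      assert (HB1 : C1_on a b (Bop f u0 du0 h dh) (Cop f u0 du0 h dh)) by (split; auto).
      assert (F := FTC a b _ _ ltac:(lra) (C1_mult a b h dh _ _ ltac:(lra) Hh HB1)).
      assert (EQ : Qf f u0 du0 a b h dh =
                   RInt (fun x => dh x * Bop f u0 du0 h dh x + h x * Cop f u0 du0 h dh x) a b).
      { unfold Qf. apply RInt_ext_on; try lra. intros x Hx. unfold Bop, Cop.
        rewrite (schwarz_along f u0 du0 x Hf). ring. }
      rewrite EQ, F, HBa in Qnn. lra.
  - intros [Hnz Hpos].
    assert (Hha : h a <> 0).
    { intros H0. destruct Hnt as [x1 [Hx1 Hhx1]]. apply Hhx1.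
      apply (jac_unique a b f u0 du0 h dh c0 a); auto; lra. }
    apply (suff a b f u0 du0 h dh c0); auto.
    intros x Hx. destruct (Req_dec x a) as [->|Hne]; auto. apply Hnz; lra.
Qed.
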